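(* Let $J\subset\mathbb{R}$ be a compact interval, $c$ an endpoint of $J$, and let $f=\sum_{k\ge k_0}c_kg_k\in C^\infty(J)$ be a series satisfying conditions (i)–(iii) below (so $f$ is pliable at $c$). Then: (a) the partial sums $\sum_{k=k_0}^l c_kg_k$ converge to $f$ in the $C^r$ norm for each $r\in\mathbb{Z}_{\ge0}$; (b) for each $r\in\mathbb{Z}_{\ge0}$, $f^{(r)}(c)=0$ and $f^{(r)}=\sum_{k\ge k_0}c_kg_k^{(r)}$ is a series satisfying (i)–(iii), so $f^{(r)}$ is pliable at $c$; (c) $hf+g$ is pliable at $c$ for every $h,g\in C^\infty(J)$ with $\mathrm{supp}\,g\subset J\setminus\{c\}$; (d) $f\circ\iota$ is pliable at $\iota^{-1}(c)$ for each isometry $\iota$ of $\mathbb{R}$; (e) if $d\colon K\to J$ is a diffeomorphism from a compact interval $K$, then $f\circ d$ is pliable at $d^{-1}(c)$.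
   Context: A sequence $(a_k)$ grows at most exponentially if $(2^{k\gamma}a_k)$ is bounded for some $\gamma\in\mathbb{R}$; $(a_k)$ converges super-exponentially to $a$ if $2^{k\gamma}(a_k-a)\to0$ for every $\gamma\in\mathbb{R}$. The $C^r$ norm is $\|u\|_r=\sum_{i=0}^r\max|u^{(i)}|$. Given $k_0\in\mathbb{Z}$ and an endpoint $c$ of a compact interval $J$, $f\in C^\infty(J)$ is pliable at $c$ if $f=\sum_{k\ge k_0}c_kg_k$ where (i) $(c_k)$ is a sequence of positive reals converging super-exponentially to $0$; (ii) $g_k\in C^\infty(J)$, $\{\mathrm{supp}\,g_k\}_{k\ge k_0}$ is a locally finite family of compact subsets of $J\setminus\{c\}$, and for every $r$ the sequence of $C^r$ norms of $g_k$ grows at most exponentially; (iii) there is $L>0$ such that whenever $0<2\varepsilon<$ length of $J$ and $J_\varepsilon$ is the set of indices $k$ for which $\mathrm{supp}\,g_k$ meets $\{x\in J:\varepsilon\le|x-c|\le2\varepsilon\}$, then $J_\varepsilon$ has at most $L$ elements and $2^{-kL}\le\varepsilon$ for every $k\in J_\varepsilon$. *)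

(* Defs.v *)
From Stdlib Require Import Reals Lra ZArith List ClassicalEpsilon.
From Coquelicot Require Import Coquelicot.
Open Scope R_scope.

Definition Icc (a b x : R) : Prop := a <= x <= b.

(* one-sided / within-J derivative: difference quotient limit along J \ {x} *)
Definition is_derive_within (a b : R) (f : R -> R) (x l : R) : Prop :=
  filterlim (fun y => (f y - f x) / (y - x))
    (within (fun y => Icc a b y /\ y <> x) (locally x)) (locally l).

(* the derivative within J (chosen by description; unique when a < b) *)
Definition Dw (a b : R) (f : R -> R) (x : R) : R :=
  epsilon (inhabits 0) (fun l => is_derive_within a b f x l).

Fixpoint deriv_n (a b : R) (f : R -> R) (n : nat) : R -> R :=
  match n with
  | O => f
  | S m => fun x => Dw a b (deriv_n a b f m) x
  end.

Definition smooth (a b : R) (f : R -> R) : Prop :=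
  forall (n : nat) (x : R), Icc a b x ->
    exists l, is_derive_within a b (deriv_n a b f n) x l.

(* C^r norm: sum_{i=0}^r max_J |u^(i)| (max realised as a supremum) *)
Definition Cnorm (a b : R) (r : nat) (u : R -> R) : R :=
  sum_n (fun i => real (Lub_Rbar (fun y => exists x, Icc a b x /\
                                      y = Rabs (deriv_n a b u i x)))) r.

(* support of g in J: closure of {x in J | g x <> 0} *)
Definition supp (a b : R) (g : R -> R) (x : R) : Prop :=
  Icc a b x /\ forall eps, 0 < eps ->
    exists y, Icc a b y /\ Rabs (y - x) < eps /\ g y <> 0.

Definition pow2 (t : R) : R := Rpower 2 t.

Definition at_most_exp (k0 : Z) (s : Z -> R) : Prop :=
  exists gamma M : R, forall k : Z, (k0 <= k)%Z ->
    Rabs (pow2 (IZR k * gamma) * s k) <= M.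

Definition super_exp_zero (k0 : Z) (s : Z -> R) : Prop :=
  forall gamma : R,
    is_lim_seq (fun n : nat => pow2 (IZR (k0 + Z.of_nat n) * gamma) *
                               s (k0 + Z.of_nat n)%Z) 0.

Definition Jeps (a b c : R) (k0 : Z) (g : Z -> R -> R) (eps : R) (k : Z) : Prop :=
  (k0 <= k)%Z /\ exists x, supp a b (g k) x /\ eps <= Rabs (x - c) <= 2 * eps.

Definition pliable_series (a b c : R) (k0 : Z) (cs : Z -> R) (gs : Z -> R -> R)
  : Prop :=
  (forall k, (k0 <= k)%Z -> 0 < cs k) /\
  super_exp_zero k0 cs /\
  (forall k, (k0 <= k)%Z -> smooth a b (gs k) /\ ~ supp a b (gs k) c) /\
  (forall x, Icc a b x -> x <> c ->
     exists delta, 0 < delta /\ exists N : Z, forall k, (k0 <= k)%Z -> (N <= k)%Z ->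
       forall y, supp a b (gs k) y -> delta <= Rabs (y - x)) /\
  (forall r : nat, at_most_exp k0 (fun k => Cnorm a b r (gs k))) /\
  (exists L, 0 < L /\ forall eps, 0 < 2 * eps < b - a ->
     (forall l : list Z, NoDup l -> (forall k, In k l -> Jeps a b c k0 gs eps k) ->
        INR (length l) <= L) /\
     (forall k, Jeps a b c k0 gs eps k -> pow2 (- (IZR k) * L) <= eps)).

Definition partial_sum (k0 : Z) (cs : Z -> R) (gs : Z -> R -> R) (m : nat) (x : R) : R :=
  sum_n (fun n => cs (k0 + Z.of_nat n)%Z * gs (k0 + Z.of_nat n)%Z x) m.

Definition sums_to (a b : R) (k0 : Z) (cs : Z -> R) (gs : Z -> R -> R) (f : R -> R)
  : Prop :=
  forall x, Icc a b x -> is_lim_seq (fun m => partial_sum k0 cs gs m x) (f x).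

Definition pliable (a b c : R) (f : R -> R) : Prop :=
  (c = a \/ c = b) /\ smooth a b f /\
  exists (k0 : Z) (cs : Z -> R) (gs : Z -> R -> R),
    pliable_series a b c k0 cs gs /\ sums_to a b k0 cs gs f.

(* Main.v *)
Require Import Defs.
From Stdlib Require Import Reals ZArith List.
From Coquelicot Require Import Coquelicot.
From Stdlib Require Import Lra Lia Classical ClassicalEpsilon FunctionalExtensionality PropExtensionality.
Open Scope R_scope.
Local Notation pow2 := Defs.pow2.

Definition W (a b x : R) := within (fun y => Icc a b y /\ y <> x) (locally x).
Definition q (f : R -> R) (x : R) := fun y => (f y - f x) / (y - x).

Lemma lim_mult (F : (R -> Prop) -> Prop) (FF : Filter F) (u v : R -> R) (lu lv : R) :
  filterlim u F (locally lu) -> filterlim v F (locally lv) ->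
  filterlim (fun y => u y * v y) F (locally (lu * lv)).
Proof. intros Hu Hv. exact (filterlim_comp_2 u v Rmult Hu Hv (filterlim_mult lu lv)). Qed.

Lemma lim_plus (F : (R -> Prop) -> Prop) (FF : Filter F) (u v : R -> R) (lu lv : R) :
  filterlim u F (locally lu) -> filterlim v F (locally lv) ->
  filterlim (fun y => u y + v y) F (locally (lu + lv)).
Proof. intros Hu Hv. exact (filterlim_comp_2 u v Rplus Hu Hv (filterlim_plus lu lv)). Qed.

Lemma lim_const (F : (R -> Prop) -> Prop) (FF : Filter F) (k : R) :
  filterlim (fun _ : R => k) F (locally k).
Proof. apply filterlim_const. Qed.

Lemma near_point a b x : a < b -> Icc a b x -> forall d, 0 < d ->
  exists y, Icc a b y /\ y <> x /\ Rabs (y - x) < d.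
Proof.
  unfold Icc; intros Hab Hx d Hd.
  set (t := Rmin d (b - a) / 2).
  assert (Ht : 0 < t /\ t < d /\ 2*t <= b - a).
  { unfold t. pose proof (Rmin_l d (b-a)). pose proof (Rmin_r d (b-a)).
    destruct (Rle_dec d (b-a)); [rewrite Rmin_left by lra|rewrite Rmin_right by lra]; lra. }
  destruct (Rle_dec (x + t) b).
  - exists (x + t). split; [unfold Icc; lra|]. split; [lra|]. rewrite Rabs_right; lra.
  - exists (x - t). split; [unfold Icc; lra|]. split; [lra|]. rewrite Rabs_left; lra.
Qed.

Instance W_proper a b x : a < b -> Icc a b x -> ProperFilter (W a b x).
Proof.
  intros Hab Hx. constructor.
  - intros P [e HP]. destruct (near_point a b x Hab Hx e (cond_pos e)) as [y [Hy [Hyx Hyd]]].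
    exists y. apply HP; [exact Hyd| split; assumption].
  - apply within_filter, locally_filter.
Qed.

Lemma W_filter a b x : Filter (W a b x).
Proof. apply within_filter, locally_filter. Qed.
Hint Resolve W_filter : core.

Lemma idw a b f x l : is_derive_within a b f x l = filterlim (q f x) (W a b x) (locally l).
Proof. reflexivity. Qed.

Lemma dw_unique a b f x l1 l2 : a < b -> Icc a b x ->
  is_derive_within a b f x l1 -> is_derive_within a b f x l2 -> l1 = l2.
Proof.
  intros Hab Hx H1 H2. pose proof (W_proper a b x Hab Hx).
  exact (filterlim_locally_unique (F := W a b x) _ l1 l2 H1 H2).
Qed.

Lemma Dw_eq a b f x l : a < b -> Icc a b x -> is_derive_within a b f x l -> Dw a b f x = l.
Proof.
  intros Hab Hx H. unfold Dw.
  apply (dw_unique a b f x); auto.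
  apply epsilon_spec. exists l; exact H.
Qed.

Lemma Dw_spec a b f x : a < b -> Icc a b x -> (exists l, is_derive_within a b f x l) ->
  is_derive_within a b f x (Dw a b f x).
Proof. intros Hab Hx [l H]. rewrite (Dw_eq a b f x l); auto. Qed.

Lemma W_ev a b x (P : R -> Prop) : (forall y, Icc a b y -> y <> x -> P y) -> W a b x P.
Proof. intros H. exists (mkposreal 1 Rlt_0_1). intros y _ [Hy Hyx]. auto. Qed.

Lemma dw_ext a b f g x l : Icc a b x -> (forall y, Icc a b y -> f y = g y) ->
  is_derive_within a b f x l -> is_derive_within a b g x l.
Proof.
  intros Hx Hfg H. rewrite idw in *. apply (filterlim_ext_loc (q f x)); auto.
  apply W_ev. intros y Hy _. unfold q. rewrite !Hfg; auto.
Qed.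

Lemma lim_sub_x a b x : filterlim (fun y => y - x) (W a b x) (locally 0).
Proof.
  intros P [e HP]. exists e. intros y Hy _. apply HP.
  change (Rabs (y - x - 0) < e). rewrite Rminus_0_r. exact Hy.
Qed.

Lemma dw_cont a b f x l : is_derive_within a b f x l ->
  filterlim f (W a b x) (locally (f x)).
Proof.
  intros H. rewrite idw in H.
  apply (filterlim_ext_loc (fun y => f x + q f x y * (y - x))); auto.
  - apply W_ev. intros y _ Hyx. unfold q. field. lra.
  - assert (Hl : filterlim (fun y => f x + q f x y * (y - x)) (W a b x) (locally (f x + l * 0))).
    { apply lim_plus; auto. apply lim_const; auto. apply lim_mult; auto. apply lim_sub_x. }
    rewrite Rmult_0_r, Rplus_0_r in Hl. exact Hl.
Qed.

Lemma dw_cont_ed a b f x l : is_derive_within a b f x l ->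
  forall eps, 0 < eps -> exists del, 0 < del /\ forall y, Icc a b y -> Rabs (y - x) < del ->
    Rabs (f y - f x) < eps.
Proof.
  intros H eps Heps. pose proof (dw_cont a b f x l H) as Hc.
  destruct (Hc (ball (f x) (mkposreal eps Heps)) (locally_ball _ _)) as [[d Hd] Hd'].
  exists d; split; auto. intros y Hy Hyd.
  destruct (Req_dec y x) as [->|Hyx]. { rewrite Rminus_diag, Rabs_R0; auto. }
  exact (Hd' y Hyd (conj Hy Hyx)).
Qed.

Lemma dw_const a b (k : R) x : is_derive_within a b (fun _ => k) x 0.
Proof.
  rewrite idw. apply (filterlim_ext_loc (fun _ => 0)); [|apply lim_const; auto].
  apply W_ev. intros y _ Hyx. unfold q. field. lra.
Qed.

Lemma dw_id a b x : is_derive_within a b (fun y => y) x 1.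
Proof.
  rewrite idw. apply (filterlim_ext_loc (fun _ => 1)); [|apply lim_const; auto].
  apply W_ev. intros y _ Hyx. unfold q. field. lra.
Qed.

Lemma dw_plus a b f g x l1 l2 : is_derive_within a b f x l1 -> is_derive_within a b g x l2 ->
  is_derive_within a b (fun y => f y + g y) x (l1 + l2).
Proof.
  intros H1 H2. rewrite idw in *.
  apply (filterlim_ext_loc (fun y => q f x y + q g x y)); [|apply lim_plus; auto].
  apply W_ev. intros y _ Hyx. unfold q. field. lra.
Qed.

Lemma dw_scal a b (k : R) f x l : is_derive_within a b f x l ->
  is_derive_within a b (fun y => k * f y) x (k * l).
Proof.
  intros H1. rewrite idw in *.
  apply (filterlim_ext_loc (fun y => k * q f x y)); [|apply lim_mult; auto; apply lim_const; auto].
  apply W_ev. intros y _ Hyx. unfold q. field. lra.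
Qed.

Lemma dw_mult a b f g x l1 l2 : is_derive_within a b f x l1 -> is_derive_within a b g x l2 ->
  is_derive_within a b (fun y => f y * g y) x (l1 * g x + f x * l2).
Proof.
  intros H1 H2. pose proof (dw_cont _ _ _ _ _ H1) as Hc. rewrite idw in *.
  apply (filterlim_ext_loc (fun y => f y * q g x y + g x * q f x y)).
  - apply W_ev. intros y _ Hyx. unfold q. field. lra.
  - assert (Hl : filterlim (fun y => f y * q g x y + g x * q f x y) (W a b x) (locally (f x * l2 + g x * l1))).
    { apply lim_plus; auto; apply lim_mult; auto. apply lim_const; auto. }
    replace (l1 * g x + f x * l2) with (f x * l2 + g x * l1) by ring. exact Hl.
Qed.

Lemma dw_comp a b a' b' (F d : R -> R) x l1 l2 :
  Icc a' b' x -> (forall y, Icc a' b' y -> Icc a b (d y)) ->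
  (forall y, Icc a' b' y -> d y = d x -> y = x) ->
  is_derive_within a b F (d x) l1 -> is_derive_within a' b' d x l2 ->
  is_derive_within a' b' (fun y => F (d y)) x (l1 * l2).
Proof.
  intros Hx Hmap Hinj H1 H2.
  pose proof (dw_cont_ed _ _ _ _ _ H2) as Hc. rewrite idw in *.
  assert (Hd : filterlim d (W a' b' x) (W a b (d x))).
  { intros P [e HP]. destruct (Hc e (cond_pos e)) as [del [Hdel Hdd]].
    exists (mkposreal del Hdel). intros y Hyd [Hy Hyx]. apply HP.
    - apply (Hdd y Hy Hyd).
    - split; auto. }
  apply (filterlim_ext_loc (fun y => q F (d x) (d y) * q d x y)).
  - apply W_ev. intros y Hy Hyx. unfold q.
    assert (d y - d x <> 0). { intros E. apply Hyx, Hinj; auto. lra. }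
    field. split; lra.
  - apply lim_mult; auto. eapply filterlim_comp; [exact Hd|exact H1].
Qed.

Lemma dw_minus a b f g x l1 l2 : is_derive_within a b f x l1 -> is_derive_within a b g x l2 ->
  is_derive_within a b (fun y => f y - g y) x (l1 - l2).
Proof.
  intros H1 H2. rewrite idw in *.
  apply (filterlim_ext_loc (fun y => q f x y + (-1) * q g x y)).
  - apply W_ev. intros y _ Hyx. unfold q. field. lra.
  - replace (l1 - l2) with (l1 + (-1) * l2) by ring.
    apply lim_plus; auto. apply lim_mult; auto. apply lim_const; auto.
Qed.

Lemma W_ev_ball a b x (P : R -> Prop) e : 0 < e ->
  (forall y, Icc a b y -> y <> x -> Rabs (y - x) < e -> P y) -> W a b x P.
Proof. intros He H. exists (mkposreal e He). intros y Hy [Hy1 Hy2]. apply H; auto. Qed.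

Lemma dw_iff a b f x l : is_derive_within a b f x l <-> forall eps, 0 < eps -> exists del, 0 < del /\ forall y, Icc a b y -> y <> x ->
    Rabs (y - x) < del -> Rabs ((f y - f x) / (y - x) - l) < eps.
Proof.
  unfold is_derive_within. split.
  - intros H eps Heps.
    assert (Hb : locally l (ball l (mkposreal eps Heps))) by apply locally_ball.
    specialize (H _ Hb). destruct H as [[del Hdel] Hd].
    exists del; split; [exact Hdel|]. intros y Hy Hyx Hyd.
    apply (Hd y); [exact Hyd| split; assumption].
  - intros H P [eps HP].
    destruct (H eps (cond_pos eps)) as [del [Hdel Hd]].
    exists (mkposreal del Hdel). intros y Hyd [Hy Hyx].
    apply HP. apply (Hd y Hy Hyx Hyd).
Qed.

Definition diffJ a b f := forall x, Icc a b x -> exists l, is_derive_within a b f x l.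
Definition Sm n a b f := forall m, (m <= n)%nat -> diffJ a b (deriv_n a b f m).

Lemma deriv_n_S a b f n : deriv_n a b f (S n) = deriv_n a b (Dw a b f) n.
Proof.
  induction n. reflexivity.
  change (deriv_n a b f (S (S n))) with (fun x => Dw a b (deriv_n a b f (S n)) x).
  rewrite IHn. reflexivity.
Qed.

Lemma Dw_ext a b f g y : Icc a b y -> (forall z, Icc a b z -> f z = g z) -> Dw a b f y = Dw a b g y.
Proof.
  intros Hy H. unfold Dw.
  assert (E : (fun l => is_derive_within a b f y l) = (fun l => is_derive_within a b g y l)).
  { apply functional_extensionality; intros l. apply propositional_extensionality.
    split; apply dw_ext; auto. intros; symmetry; auto. }
  change (epsilon (inhabits 0) (fun l => is_derive_within a b f y l) =
          epsilon (inhabits 0) (fun l => is_derive_within a b g y l)).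
  rewrite E. reflexivity.
Qed.

Lemma deriv_n_ext a b f g : (forall z, Icc a b z -> f z = g z) ->
  forall n y, Icc a b y -> deriv_n a b f n y = deriv_n a b g n y.
Proof.
  intros H n. induction n; intros y Hy; simpl; auto.
  apply Dw_ext; auto.
Qed.

Lemma diff_ext a b f g : (forall z, Icc a b z -> f z = g z) -> diffJ a b f -> diffJ a b g.
Proof.
  intros H Hf x Hx. destruct (Hf x Hx) as [l Hl]. exists l. apply (dw_ext a b f); auto.
Qed.

Lemma Sm_ext a b f g n : (forall z, Icc a b z -> f z = g z) -> Sm n a b f -> Sm n a b g.
Proof.
  intros H Hf m Hm. apply (diff_ext a b (deriv_n a b f m)); auto.
  intros; apply deriv_n_ext; auto.
Qed.

Lemma Sm_S a b f n : Sm (S n) a b f <-> diffJ a b f /\ Sm n a b (Dw a b f).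
Proof.
  split.
  - intros H. split. apply (H 0%nat); lia.
    intros m Hm. rewrite <- deriv_n_S. apply H; lia.
  - intros [H0 H] m Hm. destruct m. exact H0. rewrite deriv_n_S. apply H; lia.
Qed.

Lemma Sm_mono a b f n : Sm (S n) a b f -> Sm n a b f.
Proof. intros H m Hm. apply H; lia. Qed.

Lemma Sm_0 a b f : Sm 0 a b f <-> diffJ a b f.
Proof. split. intros H; apply (H 0%nat); lia. intros H m Hm. replace m with 0%nat by lia. exact H. Qed.

Lemma smooth_Sm a b f : smooth a b f <-> forall n, Sm n a b f.
Proof.
  split. intros H n m _ x Hx. apply H; auto.
  intros H n x Hx. apply (H n n); auto.
Qed.

Lemma smooth_Dw a b f : smooth a b f -> smooth a b (Dw a b f).
Proof. intros H n x Hx. rewrite <- deriv_n_S. apply H; auto. Qed.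

Lemma smooth_deriv_n a b f n : smooth a b f -> smooth a b (deriv_n a b f n).
Proof.
  revert f. induction n; intros f H. exact H. rewrite deriv_n_S. apply IHn, smooth_Dw, H.
Qed.

Lemma smooth_ext a b f g : (forall z, Icc a b z -> f z = g z) -> smooth a b f -> smooth a b g.
Proof. intros H Hf. apply smooth_Sm. intros n. apply (Sm_ext a b f); auto. apply smooth_Sm; auto. Qed.

Lemma Dw_diff a b f x : a < b -> Icc a b x -> diffJ a b f -> is_derive_within a b f x (Dw a b f x).
Proof. intros. apply Dw_spec; auto. Qed.

Section Clos.
Variables a b : R.
Hypothesis Hab : a < b.

Lemma Sm_plus n : forall f g, Sm n a b f -> Sm n a b g -> Sm n a b (fun x => f x + g x).
Proof.
  induction n; intros f g Hf Hg.
  - apply Sm_0. apply Sm_0 in Hf, Hg. intros x Hx.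
    destruct (Hf x Hx) as [l1 H1]. destruct (Hg x Hx) as [l2 H2]. eexists; apply dw_plus; eauto.
  - apply Sm_S in Hf as [Hf0 Hf], Hg as [Hg0 Hg]. apply Sm_S. split.
    + intros x Hx. destruct (Hf0 x Hx) as [l1 H1]. destruct (Hg0 x Hx) as [l2 H2].
      eexists; apply dw_plus; eauto.
    + apply (Sm_ext a b (fun x => Dw a b f x + Dw a b g x)); [|apply IHn; auto].
      intros z Hz. symmetry. apply Dw_eq; auto. apply dw_plus; apply Dw_diff; auto.
Qed.

Lemma Sm_const n : forall (k : R), Sm n a b (fun _ => k).
Proof.
  induction n; intros k.
  - apply Sm_0. intros x Hx. eexists; apply dw_const.
  - apply Sm_S. split. intros x Hx. eexists; apply dw_const.
    apply (Sm_ext a b (fun _ => 0)); [|apply IHn].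
    intros z Hz. symmetry. apply Dw_eq; auto. apply dw_const.
Qed.

Lemma Sm_id n : Sm n a b (fun x => x).
Proof.
  destruct n.
  - apply Sm_0. intros x Hx. eexists; apply dw_id.
  - apply Sm_S. split. intros x Hx. eexists; apply dw_id.
    apply (Sm_ext a b (fun _ => 1)); [|apply Sm_const].
    intros z Hz. symmetry. apply Dw_eq; auto. apply dw_id.
Qed.

Lemma Sm_mult n : forall f g, Sm n a b f -> Sm n a b g -> Sm n a b (fun x => f x * g x).
Proof.
  induction n; intros f g Hf Hg.
  - apply Sm_0. apply Sm_0 in Hf, Hg. intros x Hx.
    destruct (Hf x Hx) as [l1 H1]. destruct (Hg x Hx) as [l2 H2]. eexists; apply dw_mult; eauto.
  - pose proof (Sm_mono _ _ _ _ Hf) as Hf'. pose proof (Sm_mono _ _ _ _ Hg) as Hg'.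
    apply Sm_S in Hf as [Hf0 Hf], Hg as [Hg0 Hg]. apply Sm_S. split.
    + intros x Hx. destruct (Hf0 x Hx) as [l1 H1]. destruct (Hg0 x Hx) as [l2 H2].
      eexists; apply dw_mult; eauto.
    + apply (Sm_ext a b (fun x => Dw a b f x * g x + f x * Dw a b g x)).
      * intros z Hz. symmetry. apply Dw_eq; auto. apply dw_mult; apply Dw_diff; auto.
      * apply Sm_plus; apply IHn; auto.
Qed.

Lemma Sm_scal n (k : R) f : Sm n a b f -> Sm n a b (fun x => k * f x).
Proof. intros H. apply (Sm_mult n (fun _ => k) f); auto. apply Sm_const. Qed.

End Clos.

Lemma smooth_plus a b f g : a < b -> smooth a b f -> smooth a b g -> smooth a b (fun x => f x + g x).
Proof. intros Hab Hf Hg. apply smooth_Sm. intros n. apply Sm_plus; auto; apply smooth_Sm; auto. Qed.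
Lemma smooth_mult a b f g : a < b -> smooth a b f -> smooth a b g -> smooth a b (fun x => f x * g x).
Proof. intros Hab Hf Hg. apply smooth_Sm. intros n. apply Sm_mult; auto; apply smooth_Sm; auto. Qed.
Lemma smooth_const a b k : a < b -> smooth a b (fun _ => k).
Proof. intros Hab. apply smooth_Sm. intros n. apply Sm_const; auto. Qed.
Lemma smooth_scal a b k f : a < b -> smooth a b f -> smooth a b (fun x => k * f x).
Proof. intros Hab Hf. apply smooth_Sm. intros n. apply Sm_scal; auto; apply smooth_Sm; auto. Qed.
Lemma smooth_diff a b f : smooth a b f -> diffJ a b f.
Proof. intros H x Hx. apply (H 0%nat x Hx). Qed.

Lemma deriv_n_plus a b : a < b -> forall n f g, smooth a b f -> smooth a b g ->
  forall y, Icc a b y -> deriv_n a b (fun x => f x + g x) n y = deriv_n a b f n y + deriv_n a b g n y.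
Proof.
  intros Hab n. induction n; intros f g Hf Hg y Hy. reflexivity.
  rewrite !deriv_n_S.
  rewrite (deriv_n_ext a b (Dw a b (fun x => f x + g x)) (fun x => Dw a b f x + Dw a b g x)); auto.
  - apply IHn; auto; apply smooth_Dw; auto.
  - intros z Hz. apply Dw_eq; auto. apply dw_plus; apply Dw_diff; auto; apply smooth_diff; auto.
Qed.

Lemma deriv_n_scal a b : a < b -> forall n (k : R) f, smooth a b f ->
  forall y, Icc a b y -> deriv_n a b (fun x => k * f x) n y = k * deriv_n a b f n y.
Proof.
  intros Hab n. induction n; intros k f Hf y Hy. reflexivity.
  rewrite !deriv_n_S.
  rewrite (deriv_n_ext a b (Dw a b (fun x => k * f x)) (fun x => k * Dw a b f x)); auto.
  - apply IHn; auto; apply smooth_Dw; auto.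
  - intros z Hz. apply Dw_eq; auto. apply dw_scal; apply Dw_diff; auto; apply smooth_diff; auto.
Qed.

Fixpoint sumR (F : nat -> R) (n : nat) : R :=
  match n with O => F O | S m => sumR F m + F (S m) end.

Lemma sum_n_sumR (F : nat -> R) n : sum_n F n = sumR F n.
Proof. induction n. rewrite sum_O; reflexivity. rewrite sum_Sn, IHn. reflexivity. Qed.

Lemma sumR_le F G n : (forall i, (i <= n)%nat -> F i <= G i) -> sumR F n <= sumR G n.
Proof. induction n; intros H; simpl. apply H; lia. apply Rplus_le_compat. apply IHn; intros; apply H; lia. apply H; lia. Qed.

Lemma sumR_plus F G n : sumR (fun i => F i + G i) n = sumR F n + sumR G n.
Proof. induction n; simpl; [|rewrite IHn]; ring. Qed.

Lemma sumR_scal k F n : sumR (fun i => k * F i) n = k * sumR F n.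
Proof. induction n; simpl; [|rewrite IHn]; ring. Qed.

Lemma sumR_ext F G n : (forall i, (i <= n)%nat -> F i = G i) -> sumR F n = sumR G n.
Proof. induction n; intros H; simpl. apply H; lia. f_equal. apply IHn. intros; apply H; lia. apply H; lia. Qed.

Lemma sumR_shift F n : sumR F (S n) = F O + sumR (fun i => F (S i)) n.
Proof. induction n; simpl in *. ring. rewrite IHn. ring. Qed.

Lemma sumR_nonneg F n : (forall i, (i <= n)%nat -> 0 <= F i) -> 0 <= sumR F n.
Proof. induction n; intros H; simpl. apply H; lia. apply Rplus_le_le_0_compat. apply IHn; intros; apply H; lia. apply H; lia. Qed.

Lemma sumR_abs F n : Rabs (sumR F n) <= sumR (fun i => Rabs (F i)) n.
Proof. induction n; simpl. lra. eapply Rle_trans. apply Rabs_triang. lra. Qed.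

Lemma sumR_term F n i : (forall j, (j <= n)%nat -> 0 <= F j) -> (i <= n)%nat -> F i <= sumR F n.
Proof.
  induction n; intros H Hi; simpl.
  - replace i with O by lia. lra.
  - destruct (Nat.eq_dec i (S n)) as [->|Hne].
    + pose proof (sumR_nonneg F n ltac:(intros; apply H; lia)). lra.
    + pose proof (IHn ltac:(intros; apply H; lia) ltac:(lia)). pose proof (H (S n) ltac:(lia)). lra.
Qed.

Definition sup0 (a b : R) (u : R -> R) : R :=
  real (Lub_Rbar (fun y => exists x, Icc a b x /\ y = Rabs (u x))).

Lemma Cnorm_sum a b r u : Cnorm a b r u = sumR (fun i => sup0 a b (deriv_n a b u i)) r.
Proof. unfold Cnorm. rewrite sum_n_sumR. reflexivity. Qed.

Definition bnd a b u := exists B, forall x, Icc a b x -> Rabs (u x) <= B.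

Lemma sup0_le a b u B : a <= b -> (forall x, Icc a b x -> Rabs (u x) <= B) -> sup0 a b u <= B.
Proof.
  intros Hab H. unfold sup0.
  destruct (Lub_Rbar_correct (fun y => exists x, Icc a b x /\ y = Rabs (u x))) as [Hub Hlub].
  assert (Ha : Icc a b a) by (unfold Icc; lra).
  assert (H1 : Rbar_le (Rabs (u a)) (Lub_Rbar (fun y => exists x, Icc a b x /\ y = Rabs (u x)))).
  { apply Hub. exists a; auto. }
  assert (H2 : Rbar_le (Lub_Rbar (fun y => exists x, Icc a b x /\ y = Rabs (u x))) B).
  { apply Hlub. intros y [x [Hx ->]]. simpl. apply H; auto. }
  destruct (Lub_Rbar _); simpl in *; auto; try contradiction.
Qed.

Lemma sup0_ge a b u x : bnd a b u -> Icc a b x -> Rabs (u x) <= sup0 a b u.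
Proof.
  intros [B HB] Hx. unfold sup0.
  destruct (Lub_Rbar_correct (fun y => exists x, Icc a b x /\ y = Rabs (u x))) as [Hub Hlub].
  assert (H1 : Rbar_le (Rabs (u x)) (Lub_Rbar (fun y => exists x, Icc a b x /\ y = Rabs (u x)))).
  { apply Hub. exists x; auto. }
  assert (H2 : Rbar_le (Lub_Rbar (fun y => exists x, Icc a b x /\ y = Rabs (u x))) B).
  { apply Hlub. intros y [z [Hz ->]]. simpl. apply HB; auto. }
  destruct (Lub_Rbar _); simpl in *; auto; try contradiction.
Qed.

Lemma sup0_nonneg a b u : a <= b -> 0 <= sup0 a b u.
Proof.
  intros Hab. unfold sup0.
  destruct (Lub_Rbar_correct (fun y => exists x, Icc a b x /\ y = Rabs (u x))) as [Hub Hlub].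
  assert (Ha : Icc a b a) by (unfold Icc; lra).
  assert (H1 : Rbar_le (Rabs (u a)) (Lub_Rbar (fun y => exists x, Icc a b x /\ y = Rabs (u x)))).
  { apply Hub. exists a; auto. }
  destruct (Lub_Rbar _); simpl in *; try lra. pose proof (Rabs_pos (u a)); lra.
Qed.

Lemma sup0_ext a b u v : (forall x, Icc a b x -> u x = v x) -> sup0 a b u = sup0 a b v.
Proof.
  intros H. unfold sup0. f_equal. f_equal. apply functional_extensionality; intros y.
  apply propositional_extensionality. split; intros [x [Hx ->]]; exists x; split; auto; rewrite H; auto.
Qed.

Definition clamp a b x := Rmax a (Rmin b x).

Lemma clamp_Icc a b x : a <= b -> Icc a b (clamp a b x).
Proof. intros. unfold clamp, Icc, Rmax, Rmin. repeat destruct Rle_dec; lra. Qed.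
Lemma clamp_id a b x : Icc a b x -> clamp a b x = x.
Proof. unfold clamp, Icc, Rmax, Rmin. intros. repeat destruct Rle_dec; lra. Qed.
Lemma clamp_lip a b x y : a <= b -> Icc a b y -> Rabs (clamp a b x - y) <= Rabs (x - y).
Proof. unfold clamp, Icc, Rmax, Rmin. intros. repeat destruct Rle_dec; unfold Rabs; repeat destruct Rcase_abs; lra. Qed.

Definition contJ a b u := forall x, Icc a b x -> forall eps, 0 < eps -> exists del, 0 < del /\
  forall y, Icc a b y -> Rabs (y - x) < del -> Rabs (u y - u x) < eps.

Lemma diff_contJ a b u : diffJ a b u -> contJ a b u.
Proof. intros H x Hx. destruct (H x Hx) as [l Hl]. apply (dw_cont_ed a b u x l Hl). Qed.

Lemma contJ_bnd a b u : a < b -> contJ a b u -> bnd a b u.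
Proof.
  intros Hab Hc.
  set (F := fun x => Rabs (u (clamp a b x))).
  assert (HF : forall c, a <= c <= b -> continuity_pt F c).
  { intros c Hcab eps Heps. destruct (Hc c Hcab eps Heps) as [del [Hdel Hd]].
    exists del. split; auto. intros y [_ Hy]. unfold R_dist in *. simpl in *. unfold R_dist in *.
    unfold F. rewrite (clamp_id a b c Hcab).
    eapply Rle_lt_trans. apply Rabs_triang_inv2.
    apply Hd. apply clamp_Icc; lra. eapply Rle_lt_trans. apply clamp_lip; auto; lra. exact Hy. }
  destruct (continuity_ab_maj F a b (Rlt_le _ _ Hab) HF) as [M [HM _]].
  exists (F M). intros x Hx. specialize (HM x Hx). unfold F at 1 in HM.
  rewrite clamp_id in HM; auto.
Qed.

Lemma diff_bnd a b u : a < b -> diffJ a b u -> bnd a b u.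
Proof. intros. apply contJ_bnd, diff_contJ; auto. Qed.

Lemma sup0_plus a b u v : a <= b -> bnd a b u -> bnd a b v -> sup0 a b (fun x => u x + v x) <= sup0 a b u + sup0 a b v.
Proof.
  intros Hab Hu Hv. apply sup0_le; auto. intros x Hx. eapply Rle_trans. apply Rabs_triang.
  apply Rplus_le_compat; apply sup0_ge; auto.
Qed.

Lemma sup0_mult a b u v : a <= b -> bnd a b u -> bnd a b v -> sup0 a b (fun x => u x * v x) <= sup0 a b u * sup0 a b v.
Proof.
  intros Hab Hu Hv. apply sup0_le; auto. intros x Hx. rewrite Rabs_mult.
  apply Rmult_le_compat; try apply Rabs_pos; apply sup0_ge; auto.
Qed.

Section CN.
Variables a b : R.
Hypothesis Hab : a < b.

Lemma sn u : 0 <= sup0 a b u.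
Proof. apply sup0_nonneg; lra. Qed.

Lemma Cnorm_0 u : Cnorm a b 0 u = sup0 a b u.
Proof. rewrite Cnorm_sum. reflexivity. Qed.

Lemma Cnorm_S r u : Cnorm a b (S r) u = sup0 a b u + Cnorm a b r (Dw a b u).
Proof.
  rewrite !Cnorm_sum, sumR_shift. f_equal. apply sumR_ext. intros i _. rewrite deriv_n_S. reflexivity.
Qed.

Lemma Cnorm_nonneg r u : 0 <= Cnorm a b r u.
Proof. rewrite Cnorm_sum. apply sumR_nonneg. intros; apply sup0_nonneg; lra. Qed.

Lemma Cnorm_ext r u v : (forall x, Icc a b x -> u x = v x) -> Cnorm a b r u = Cnorm a b r v.
Proof.
  intros H. rewrite !Cnorm_sum. apply sumR_ext. intros i _. apply sup0_ext. intros; apply deriv_n_ext; auto.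
Qed.

Lemma Cnorm_mono r u : Cnorm a b r u <= Cnorm a b (S r) u.
Proof. rewrite !Cnorm_sum. cbn [sumR]. pose proof (sn (deriv_n a b u (S r))). lra. Qed.

Lemma Cnorm_mono_le r s u : (r <= s)%nat -> Cnorm a b r u <= Cnorm a b s u.
Proof.
  induction 1. lra. eapply Rle_trans. apply IHle. apply Cnorm_mono.
Qed.

Lemma Cnorm_sup_le r u : sup0 a b u <= Cnorm a b r u.
Proof. rewrite <- Cnorm_0. apply Cnorm_mono_le. lia. Qed.

Lemma Cnorm_Dw r u : Cnorm a b r (Dw a b u) <= Cnorm a b (S r) u.
Proof. rewrite Cnorm_S. pose proof (sn u). lra. Qed.

Lemma Cnorm_deriv r s : forall u, Cnorm a b r (deriv_n a b u s) <= Cnorm a b (r + s) u.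
Proof.
  induction s; intros u. rewrite Nat.add_0_r. simpl. lra.
  rewrite deriv_n_S. eapply Rle_trans. apply IHs. replace (r + S s)%nat with (S (r + s)) by lia.
  apply Cnorm_Dw.
Qed.

Lemma Cnorm_pt r u i x : smooth a b u -> (i <= r)%nat -> Icc a b x -> Rabs (deriv_n a b u i x) <= Cnorm a b r u.
Proof.
  intros Hu Hi Hx. assert (Hb : bnd a b (deriv_n a b u i)).
  { apply diff_bnd; auto. apply smooth_diff, smooth_deriv_n; auto. }
  eapply Rle_trans. apply (sup0_ge a b _ x Hb Hx).
  eapply Rle_trans. rewrite <- Cnorm_0. apply (Cnorm_deriv 0 i u). simpl. apply Cnorm_mono_le. lia.
Qed.

Lemma smooth_bnd u : smooth a b u -> bnd a b u.
Proof. intros. apply diff_bnd; auto. apply smooth_diff; auto. Qed.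

Lemma Cnorm_plus r : forall u v, smooth a b u -> smooth a b v ->
  Cnorm a b r (fun x => u x + v x) <= Cnorm a b r u + Cnorm a b r v.
Proof.
  intros u v Hu Hv. rewrite !Cnorm_sum, <- sumR_plus. apply sumR_le. intros i _.
  rewrite (sup0_ext a b _ (fun x => deriv_n a b u i x + deriv_n a b v i x)).
  apply sup0_plus; try lra; apply smooth_bnd, smooth_deriv_n; auto.
  intros; apply deriv_n_plus; auto.
Qed.

Lemma Cnorm_mult_bound r : forall h, smooth a b h -> exists K, 0 <= K /\ forall u, smooth a b u ->
  Cnorm a b r (fun x => h x * u x) <= K * Cnorm a b r u.
Proof.
  induction r; intros h Hh.
  - exists (sup0 a b h). split. apply sup0_nonneg; lra. intros u Hu. rewrite !Cnorm_0.
    apply sup0_mult; try lra; apply smooth_bnd; auto.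
  - destruct (IHr h Hh) as [K1 [HK1 H1]].
    destruct (IHr (Dw a b h) (smooth_Dw _ _ _ Hh)) as [K2 [HK2 H2]].
    exists (sup0 a b h + K2 + K1). split. pose proof (sn h); lra.
    intros u Hu. rewrite Cnorm_S.
    rewrite (Cnorm_ext r _ (fun x => Dw a b h x * u x + h x * Dw a b u x)).
    2:{ intros x Hx. apply Dw_eq; auto. apply dw_mult; apply Dw_diff; auto; apply smooth_diff; auto. }
    eapply Rle_trans. apply Rplus_le_compat_l. apply Cnorm_plus.
    apply smooth_mult; auto. apply smooth_Dw; auto. apply smooth_mult; auto. apply smooth_Dw; auto.
    pose proof (H2 u Hu). pose proof (H1 (Dw a b u) (smooth_Dw _ _ _ Hu)).
    pose proof (sup0_mult a b h u ltac:(lra) (smooth_bnd h Hh) (smooth_bnd u Hu)).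
    pose proof (Cnorm_sup_le r u). pose proof (Cnorm_S r u). pose proof (Cnorm_mono r u).
    pose proof (sn h). pose proof (sn u). pose proof (Cnorm_nonneg r (Dw a b u)).
    pose proof (Cnorm_nonneg r u).
    assert (sup0 a b h * sup0 a b u <= sup0 a b h * Cnorm a b (S r) u).
    { apply Rmult_le_compat_l; auto. rewrite Cnorm_S. lra. }
    assert (K2 * Cnorm a b r u <= K2 * Cnorm a b (S r) u) by (apply Rmult_le_compat_l; auto).
    assert (K1 * Cnorm a b r (Dw a b u) <= K1 * Cnorm a b (S r) u).
    { apply Rmult_le_compat_l; auto. apply Cnorm_Dw. }
    nra.
Qed.

End CN.

Lemma MVI a b h hd B x y : a < b ->
  (forall z, Icc a b z -> is_derive_within a b h z (hd z)) ->
  (forall z, Icc a b z -> Rabs (hd z) <= B) ->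
  Icc a b x -> Icc a b y -> Rabs (h y - h x) <= B * Rabs (y - x).
Proof.
  intros Hab Hd HB.
  assert (Main : forall x y, Icc a b x -> Icc a b y -> x < y -> Rabs (h y - h x) <= B * Rabs (y - x)).
  { clear x y. intros x y Hx Hy Hxy.
    set (F := fun z => h (clamp x y z)).
    assert (HI : forall z, x <= z <= y -> Icc a b z) by (unfold Icc in *; intros; lra).
    destruct (MVT_gen F x y hd) as [c [Hc HF]].
    - rewrite Rmin_left, Rmax_right by lra. intros z Hz.
      apply is_derive_Reals. intros eps Heps.
      destruct (proj1 (dw_iff a b h z (hd z)) (Hd z (HI z ltac:(lra))) eps Heps) as [del [Hdel Hdd]].
      assert (Hpos : 0 < Rmin del (Rmin (z - x) (y - z))).
      { repeat apply Rmin_pos; lra. }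
      exists (mkposreal _ Hpos). intros k Hk Hkd. simpl in Hkd.
      pose proof (Rmin_l del (Rmin (z - x) (y - z))). pose proof (Rmin_r del (Rmin (z - x) (y - z))).
      pose proof (Rmin_l (z - x) (y - z)). pose proof (Rmin_r (z - x) (y - z)).
      assert (Hk2 : x <= z + k <= y) by (unfold Rabs in Hkd; destruct Rcase_abs; lra).
      unfold F. rewrite !clamp_id by (unfold Icc; lra).
      replace k with (z + k - z) at 2 by ring.
      apply Hdd. apply HI; lra. lra. replace (z + k - z) with k by ring. lra.
    - rewrite Rmin_left, Rmax_right by lra. intros z Hz eps Heps.
      destruct (dw_cont_ed a b h z (hd z) (Hd z (HI z Hz)) eps Heps) as [del [Hdel Hdd]].
      exists del. split; auto. intros w [_ Hw]. unfold R_dist in *. simpl in *. unfold R_dist in *.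
      unfold F. rewrite (clamp_id x y z Hz).
      apply Hdd. apply HI, clamp_Icc; lra. eapply Rle_lt_trans. apply clamp_lip; auto; lra. exact Hw.
    - rewrite Rmin_left, Rmax_right in Hc by lra.
      unfold F in HF. rewrite !clamp_id in HF by (unfold Icc; lra).
      rewrite HF, Rabs_mult. apply Rmult_le_compat_r. apply Rabs_pos. apply HB, HI; lra. }
  intros Hx Hy. destruct (Rtotal_order x y) as [H|[H|H]].
  - apply Main; auto.
  - subst. rewrite !Rminus_diag, Rabs_R0. pose proof (HB y Hy). pose proof (Rabs_pos (hd y)). nra.
  - rewrite Rabs_minus_sym, (Rabs_minus_sym y). apply Main; auto.
Qed.

Lemma lim_abs_le (u : nat -> R) (L v B : R) N : is_lim_seq u L -> (forall n, (n >= N)%nat -> Rabs (u n - v) <= B) ->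
  Rabs (L - v) <= B.
Proof.
  intros Hu H. apply is_lim_seq_Reals in Hu.
  destruct (Rle_dec (Rabs (L - v)) B) as [|Hn]; auto. exfalso.
  destruct (Hu (Rabs (L - v) - B)) as [M HM]. lra.
  specialize (HM (max M N) ltac:(lia)). specialize (H (max M N) ltac:(lia)).
  unfold R_dist in HM. pose proof (Rabs_triang (u (max M N) - v) (L - u (max M N))).
  replace (u (max M N) - v + (L - u (max M N))) with (L - v) in H0 by ring.
  rewrite Rabs_minus_sym in HM. lra.
Qed.

Lemma ulim_deriv a b (F : nat -> R -> R) (Fd : nat -> R -> R) (f G : R -> R) (tau : nat -> R) :
  a < b ->
  (forall m x, Icc a b x -> is_derive_within a b (F m) x (Fd m x)) ->
  (forall x, Icc a b x -> is_lim_seq (fun m => F m x) (f x)) ->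
  (forall m x, Icc a b x -> Rabs (Fd m x - G x) <= tau m) ->
  is_lim_seq tau 0 ->
  forall x, Icc a b x -> is_derive_within a b f x (G x).
Proof.
  intros Hab HF Hf HG Ht x Hx. apply dw_iff. intros eps Heps.
  apply is_lim_seq_Reals in Ht. destruct (Ht (eps / 8)) as [N HN]. lra.
  assert (HN' : forall n, (n >= N)%nat -> forall z, Icc a b z -> Rabs (Fd n z - G z) < eps / 8).
  { intros n Hn z Hz. eapply Rle_lt_trans. apply HG; auto. specialize (HN n Hn). unfold R_dist in HN.
    rewrite Rminus_0_r in HN. eapply Rle_lt_trans. apply RRle_abs. exact HN. }
  destruct (proj1 (dw_iff _ _ _ _ _) (HF N x Hx) (eps / 4)) as [del [Hdel Hd]]. lra.
  exists del. split; auto. intros y Hy Hyx Hyd.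
  assert (Hyx' : y - x <> 0) by lra.
  assert (Hapos : 0 < Rabs (y - x)) by (apply Rabs_pos_lt; auto).
  assert (Key : Rabs ((f y - f x) - (F N y - F N x)) <= eps / 4 * Rabs (y - x)).
  { apply (lim_abs_le (fun n => F n y - F n x) (f y - f x) (F N y - F N x) _ N).
    - apply (is_lim_seq_minus _ _ (f y) (f x)); auto. unfold is_Rbar_minus, is_Rbar_plus. simpl. reflexivity.
    - intros n Hn.
      replace (F n y - F n x - (F N y - F N x)) with ((F n y - F N y) - (F n x - F N x)) by ring.
      apply (MVI a b (fun z => F n z - F N z) (fun z => Fd n z - Fd N z)); auto.
      + intros z Hz. apply dw_minus; auto.
      + intros z Hz. pose proof (HN' n Hn z Hz). pose proof (HN' N (le_n N) z Hz).
        replace (Fd n z - Fd N z) with ((Fd n z - G z) - (Fd N z - G z)) by ring.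
        eapply Rle_trans. apply Rabs_triang. rewrite Rabs_Ropp. lra. }
  pose proof (Hd y Hy Hyx Hyd) as H2. pose proof (HN' N (le_n N) x Hx) as H3.
  replace ((f y - f x) / (y - x) - G x) with
    (((f y - f x) - (F N y - F N x)) / (y - x) + ((F N y - F N x) / (y - x) - Fd N x) + (Fd N x - G x))
    by (field; auto).
  eapply Rle_lt_trans. apply Rabs_triang. eapply Rle_lt_trans. apply Rplus_le_compat_r. apply Rabs_triang.
  unfold Rdiv at 1. rewrite Rabs_mult, Rabs_inv.
  assert (Rabs ((f y - f x) - (F N y - F N x)) * / Rabs (y - x) <= eps / 4).
  { apply (Rmult_le_reg_r (Rabs (y - x))); auto. rewrite Rmult_assoc, Rinv_l by lra. lra. }
  lra.
Qed.

Lemma p2_pos t : 0 < pow2 t.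
Proof. unfold pow2, Rpower. apply exp_pos. Qed.

Lemma p2_plus x y : pow2 (x + y) = pow2 x * pow2 y.
Proof. unfold pow2. apply Rpower_plus. Qed.

Lemma p2_0 : pow2 0 = 1.
Proof. unfold pow2. apply Rpower_O. lra. Qed.

Lemma p2_opp_nat (n : nat) : pow2 (- INR n) = (/ 2) ^ n.
Proof. unfold pow2. rewrite Rpower_Ropp, Rpower_pow by lra. rewrite pow_inv. reflexivity. Qed.

Lemma IZR_tt k0 n : IZR (k0 + Z.of_nat n) = IZR k0 + INR n.
Proof. rewrite plus_IZR, <- INR_IZR_INZ. reflexivity. Qed.

Lemma lim0_bounded (u : nat -> R) : is_lim_seq u 0 -> exists B, 0 <= B /\ forall n, Rabs (u n) <= B.
Proof.
  intros H. apply is_lim_seq_Reals in H. destruct (H 1) as [N HN]. lra.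
  exists (1 + sumR (fun i => Rabs (u i)) N). split.
  pose proof (sumR_nonneg (fun i => Rabs (u i)) N ltac:(intros; apply Rabs_pos)). lra.
  intros n. destruct (le_lt_dec n N).
  - pose proof (sumR_term (fun i => Rabs (u i)) N n ltac:(intros; apply Rabs_pos) l). simpl in H0. lra.
  - specialize (HN n ltac:(lia)). unfold R_dist in HN. rewrite Rminus_0_r in HN.
    pose proof (sumR_nonneg (fun i => Rabs (u i)) N ltac:(intros; apply Rabs_pos)). lra.
Qed.

Lemma half_pow_pos n : 0 < (/ 2) ^ n.
Proof. apply pow_lt. lra. Qed.

Lemma geo_cauchy (T : nat -> R) A : (forall n, Rabs (T n) <= A * (/ 2) ^ n) ->
  forall m p, (m <= p)%nat -> Rabs (sumR T p - sumR T m) <= A * ((/ 2) ^ m - (/ 2) ^ p).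
Proof.
  intros H m p Hmp. induction Hmp.
  - rewrite Rminus_diag, Rabs_R0, Rminus_diag. lra.
  - cbn [sumR]. replace (sumR T m0 + T (S m0) - sumR T m) with ((sumR T m0 - sumR T m) + T (S m0)) by ring.
    eapply Rle_trans. apply Rabs_triang. specialize (H (S m0)). simpl in H |- *. lra.
Qed.

Lemma geo_lim (T : nat -> R) A : (forall n, Rabs (T n) <= A * (/ 2) ^ n) ->
  exists L : R, is_lim_seq (sumR T) L /\ forall m, Rabs (sumR T m - L) <= A * (/ 2) ^ m.
Proof.
  intros H.
  assert (HA : 0 <= A). { specialize (H 0%nat). simpl in H. pose proof (Rabs_pos (T 0%nat)). lra. }
  assert (Hc := geo_cauchy T A H).
  assert (Hex : ex_finite_lim_seq (sumR T)).
  { apply ex_lim_seq_cauchy_corr. intros eps.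
    destruct (pow_lt_1_zero (/ 2) ltac:(rewrite Rabs_right; lra) (eps / (A + 1))) as [N HN].
    { apply Rdiv_lt_0_compat. apply cond_pos. lra. }
    exists N. intros n m Hn Hm.
    assert (E : forall n m, (N <= n)%nat -> (n <= m)%nat -> Rabs (sumR T m - sumR T n) < eps).
    { intros n' m' Hn' Hm'. eapply Rle_lt_trans. apply Hc; auto.
      specialize (HN n' Hn'). rewrite Rabs_right in HN by (apply Rle_ge, Rlt_le, half_pow_pos).
      pose proof (half_pow_pos m'). pose proof (cond_pos eps).
      apply Rmult_lt_compat_r with (r := A + 1) in HN; [|lra].
      unfold Rdiv in HN. rewrite Rmult_assoc, Rinv_l, Rmult_1_r in HN by lra.
      assert (A * ((/ 2) ^ n' - (/ 2) ^ m') <= A * (/ 2) ^ n') by (apply Rmult_le_compat_l; lra).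
      assert (A * (/ 2) ^ n' <= (/ 2) ^ n' * (A + 1)) by (pose proof (half_pow_pos n'); nra).
      lra. }
    destruct (le_lt_dec n m). rewrite Rabs_minus_sym. apply E; auto. apply E; lia. }
  destruct Hex as [L HL]. exists L. split; auto. intros m.
  rewrite Rabs_minus_sym. apply (lim_abs_le (sumR T) L (sumR T m) _ m); auto.
  intros n Hn. eapply Rle_trans. apply Hc; auto. pose proof (half_pow_pos n). nra.
Qed.

Section Ser.
Variables (a b : R) (k0 : Z) (cs : Z -> R) (gs : Z -> R -> R) (f : R -> R).
Hypothesis Hab : a < b.
Hypothesis Hpos : forall k, (k0 <= k)%Z -> 0 < cs k.
Hypothesis Hsup : super_exp_zero k0 cs.
Hypothesis Hsm : forall k, (k0 <= k)%Z -> smooth a b (gs k).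
Hypothesis Hexp : forall r : nat, at_most_exp k0 (fun k => Cnorm a b r (gs k)).

Definition tt (n : nat) : Z := (k0 + Z.of_nat n)%Z.
Lemma tt_ge n : (k0 <= tt n)%Z.
Proof. unfold tt; lia. Qed.

Definition PS (i m : nat) (x : R) : R :=
  sumR (fun n => cs (tt n) * deriv_n a b (gs (tt n)) i x) m.

Lemma maj r : exists A, 0 <= A /\ forall n, cs (tt n) * Cnorm a b r (gs (tt n)) <= A * (/ 2) ^ n.
Proof.
  destruct (Hexp r) as [g [M HM]].
  destruct (lim0_bounded _ (Hsup (1 - g))) as [B [HB0 HB]].
  assert (HM0 : 0 <= M). { specialize (HM k0 (Z.le_refl _)). pose proof (Rabs_pos (pow2 (IZR k0 * g) * Cnorm a b r (gs k0))). lra. }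
  exists (B * M * pow2 (- IZR k0)). split.
  { pose proof (p2_pos (- IZR k0)). apply Rmult_le_pos; [apply Rmult_le_pos|]; lra. }
  intros n. specialize (HB n). specialize (HM (tt n) (tt_ge n)). fold (tt n) in HB.
  set (t := IZR (tt n)) in *.
  assert (E : cs (tt n) * Cnorm a b r (gs (tt n)) =
     (pow2 (t * (1 - g)) * cs (tt n)) * (pow2 (t * g) * Cnorm a b r (gs (tt n))) * pow2 (- t)).
  { assert (pow2 (t * (1 - g)) * pow2 (t * g) * pow2 (- t) = 1).
    { rewrite <- !p2_plus. replace (t * (1 - g) + t * g + - t) with 0 by ring. apply p2_0. }
    transitivity (cs (tt n) * Cnorm a b r (gs (tt n)) * (pow2 (t * (1 - g)) * pow2 (t * g) * pow2 (- t))).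
    rewrite H; ring. ring. }
  assert (Et : pow2 (- t) = pow2 (- IZR k0) * (/ 2) ^ n).
  { unfold t, tt. rewrite IZR_tt, <- p2_opp_nat, <- p2_plus. f_equal. ring. }
  rewrite E, Et. pose proof (p2_pos (- IZR k0)). pose proof (half_pow_pos n).
  pose proof (Rle_abs (pow2 (t * (1 - g)) * cs (tt n))). pose proof (Rle_abs (pow2 (t * g) * Cnorm a b r (gs (tt n)))).
  assert (0 <= pow2 (t * g) * Cnorm a b r (gs (tt n))).
  { apply Rmult_le_pos. apply Rlt_le, p2_pos. apply Cnorm_nonneg; auto. }
  assert (0 <= pow2 (t * (1 - g)) * cs (tt n)).
  { apply Rmult_le_pos. apply Rlt_le, p2_pos. apply Rlt_le, Hpos, tt_ge. }
  set (X := pow2 (t * (1 - g)) * cs (tt n)) in *. set (Y := pow2 (t * g) * Cnorm a b r (gs (tt n))) in *.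
  set (P := pow2 (- IZR k0)) in *. set (Q := (/ 2) ^ n) in *.
  assert (X * Y <= B * M) by (apply Rmult_le_compat; lra).
  assert (0 < P * Q) by (apply Rmult_lt_0_compat; auto).
  replace (B * M * P * Q) with ((B * M) * (P * Q)) by ring.
  replace (X * Y * (P * Q)) with ((X * Y) * (P * Q)) by ring.
  apply Rmult_le_compat_r; lra.
Qed.

Lemma term_bound i : exists A, forall n x, Icc a b x ->
  Rabs (cs (tt n) * deriv_n a b (gs (tt n)) i x) <= A * (/ 2) ^ n.
Proof.
  destruct (maj i) as [A [HA H]]. exists A. intros n x Hx.
  rewrite Rabs_mult, (Rabs_right (cs (tt n))) by (apply Rle_ge, Rlt_le, Hpos, tt_ge).
  eapply Rle_trans; [|apply H]. apply Rmult_le_compat_l. apply Rlt_le, Hpos, tt_ge.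
  apply Cnorm_pt; auto. apply Hsm, tt_ge.
Qed.

Lemma PS_deriv i m x : Icc a b x -> is_derive_within a b (PS i m) x (PS (S i) m x).
Proof.
  intros Hx. unfold PS. induction m.
  - simpl. apply dw_scal. apply Dw_diff; auto. apply smooth_diff, smooth_deriv_n, Hsm, tt_ge.
  - cbn [sumR]. apply dw_plus; auto. apply dw_scal. apply Dw_diff; auto.
    apply smooth_diff, smooth_deriv_n, Hsm, tt_ge.
Qed.

Lemma PS_conv_all : sums_to a b k0 cs gs f -> smooth a b f ->
  forall i, (forall x, Icc a b x -> is_lim_seq (fun m => PS i m x) (deriv_n a b f i x)) /\
    exists A, forall m x, Icc a b x -> Rabs (PS i m x - deriv_n a b f i x) <= A * (/ 2) ^ m.
Proof.
  intros Hsum Hf.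
  assert (Rate : forall i, (forall x, Icc a b x -> is_lim_seq (fun m => PS i m x) (deriv_n a b f i x)) ->
    exists A, forall m x, Icc a b x -> Rabs (PS i m x - deriv_n a b f i x) <= A * (/ 2) ^ m).
  { intros i Hi. destruct (term_bound i) as [A HA]. exists A. intros m x Hx.
    destruct (geo_lim _ A (fun n => HA n x Hx)) as [L [HL HLb]].
    specialize (Hi x Hx). assert (HL' : is_lim_seq (fun m => PS i m x) L) by exact HL.
    assert (L = deriv_n a b f i x).
    { apply is_lim_seq_unique in HL'. apply is_lim_seq_unique in Hi. rewrite HL' in Hi.
      congruence. }
    subst L. apply HLb. }
  intros i. induction i.
  - assert (H0 : forall x, Icc a b x -> is_lim_seq (fun m => PS 0 m x) (deriv_n a b f 0 x)).
    { intros x Hx. simpl. apply (is_lim_seq_ext (fun m => partial_sum k0 cs gs m x)); auto.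
      intros m. unfold partial_sum, PS. rewrite sum_n_sumR. reflexivity. }
    split; auto.
  - destruct IHi as [IH _]. destruct (term_bound (S i)) as [A HA].
    set (G := fun x => real (Lim_seq (fun m => PS (S i) m x))).
    assert (HG : forall x, Icc a b x -> is_lim_seq (fun m => PS (S i) m x) (G x) /\
      forall m, Rabs (PS (S i) m x - G x) <= A * (/ 2) ^ m).
    { intros x Hx. destruct (geo_lim _ A (fun n => HA n x Hx)) as [L [HL HLb]].
      assert (HL' : is_lim_seq (fun m => PS (S i) m x) L) by exact HL.
      assert (G x = L). { unfold G. apply is_lim_seq_unique in HL'. rewrite HL'. reflexivity. }
      rewrite H. split; [exact HL'|exact HLb]. }
    assert (HD : forall x, Icc a b x -> is_derive_within a b (deriv_n a b f i) x (G x)).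
    { apply (ulim_deriv a b (PS i) (PS (S i)) _ G (fun m => A * (/ 2) ^ m)); auto.
      - intros m x Hx. apply PS_deriv; auto.
      - intros m x Hx. apply HG; auto.
      - replace (Finite 0) with (Rbar_mult A 0) by (simpl; f_equal; ring).
        apply is_lim_seq_scal_l. apply is_lim_seq_geom. rewrite Rabs_right; lra. }
    assert (Hc : forall x, Icc a b x -> is_lim_seq (fun m => PS (S i) m x) (deriv_n a b f (S i) x)).
    { intros x Hx. simpl. rewrite (Dw_eq a b _ x (G x)); auto. apply HG; auto. }
    split; auto.
Qed.


Lemma PS_smooth i m : smooth a b (PS i m).
Proof.
  unfold PS. induction m.
  - simpl. apply smooth_scal; auto. apply smooth_deriv_n, Hsm, tt_ge.
  - cbn [sumR]. apply smooth_plus; auto. apply smooth_scal; auto. apply smooth_deriv_n, Hsm, tt_ge.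
Qed.

Lemma PS_deriv_n m i y : Icc a b y -> deriv_n a b (PS 0 m) i y = PS i m y.
Proof.
  intros Hy. induction m.
  - unfold PS. simpl. apply deriv_n_scal; auto. apply Hsm, tt_ge.
  - change (PS 0 (S m)) with (fun x => PS 0 m x + cs (tt (S m)) * gs (tt (S m)) x).
    rewrite deriv_n_plus; auto.
    + rewrite IHm, deriv_n_scal; auto. apply Hsm, tt_ge.
    + apply PS_smooth.
    + apply smooth_scal; auto. apply Hsm, tt_ge.
Qed.

Lemma part_a : sums_to a b k0 cs gs f -> smooth a b f -> forall r : nat,
  is_lim_seq (fun m => Cnorm a b r (fun x => partial_sum k0 cs gs m x - f x)) 0.
Proof.
  intros Hsum Hf r.
  assert (Hpt : forall m i y, Icc a b y ->
     deriv_n a b (fun x => partial_sum k0 cs gs m x - f x) i y = PS i m y - deriv_n a b f i y).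
  { intros m i y Hy.
    rewrite (deriv_n_ext a b _ (fun x => PS 0 m x + (-1) * f x)); auto.
    - rewrite deriv_n_plus, deriv_n_scal, PS_deriv_n; auto. ring. apply PS_smooth. apply smooth_scal; auto.
    - intros z Hz. unfold partial_sum, PS, tt. rewrite sum_n_sumR. cbn [deriv_n]. ring. }
  assert (Hb : exists C, forall m, Cnorm a b r (fun x => partial_sum k0 cs gs m x - f x) <= C * (/ 2) ^ m).
  { induction r.
    - destruct (proj2 (PS_conv_all Hsum Hf 0)) as [A HA]. exists A. intros m. rewrite Cnorm_0.
      apply sup0_le; try lra. intros x Hx. pose proof (Hpt m 0%nat x Hx) as E. simpl in E |- *. rewrite E. apply HA; auto.
    - destruct IHr as [C HC]. destruct (proj2 (PS_conv_all Hsum Hf (S r))) as [A HA].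
      exists (C + A). intros m. rewrite Cnorm_sum. cbn [sumR]. rewrite <- Cnorm_sum.
      pose proof (HC m). assert (sup0 a b (deriv_n a b (fun x => partial_sum k0 cs gs m x - f x) (S r)) <= A * (/ 2) ^ m).
      { apply sup0_le; try lra. intros x Hx. rewrite Hpt; auto. }
      lra. }
  destruct Hb as [C HC].
  apply (is_lim_seq_le_le (fun _ => 0) _ (fun m => C * (/ 2) ^ m)).
  - intros m. split. apply Cnorm_nonneg; auto. apply HC.
  - apply is_lim_seq_const.
  - replace (Finite 0) with (Rbar_mult C 0) by (simpl; f_equal; ring).
    apply is_lim_seq_scal_l. apply is_lim_seq_geom. rewrite Rabs_right; lra.
Qed.

End Ser.

Lemma nsupp_zero a b g x : ~ supp a b g x -> Icc a b x ->
  exists e, 0 < e /\ forall y, Icc a b y -> Rabs (y - x) < e -> g y = 0.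
Proof.
  intros H Hx. apply NNPP. intros Hn. apply H. split; auto. intros eps Heps.
  apply NNPP. intros Hn2. apply Hn. exists eps. split; auto. intros y Hy Hyd.
  apply NNPP. intros Hg. apply Hn2. exists y. auto.
Qed.

Lemma zero_nsupp a b g x e : 0 < e -> (forall y, Icc a b y -> Rabs (y - x) < e -> g y = 0) -> ~ supp a b g x.
Proof.
  intros He H [Hx Hs]. destruct (Hs e He) as [y [Hy [Hyd Hg]]]. apply Hg, H; auto.
Qed.

Lemma loc_zero_deriv a b g x0 e : a < b -> (forall y, Icc a b y -> Rabs (y - x0) < e -> g y = 0) ->
  forall n y, Icc a b y -> Rabs (y - x0) < e -> deriv_n a b g n y = 0.
Proof.
  intros Hab H n. induction n; intros y Hy Hyd. simpl; auto.
  simpl. apply Dw_eq; auto. rewrite idw.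
  apply (filterlim_ext_loc (fun _ => 0)); [|apply lim_const; auto].
  apply (W_ev_ball a b y _ (e - Rabs (y - x0))). lra.
  intros z Hz Hzy Hzd. unfold q. rewrite !IHn; auto. unfold Rdiv. ring.
  pose proof (Rabs_triang (z - y) (y - x0)). replace (z - y + (y - x0)) with (z - x0) in H0 by ring. lra.
Qed.

Lemma supp_deriv a b g n x : a < b -> supp a b (deriv_n a b g n) x -> supp a b g x.
Proof.
  intros Hab Hs. apply NNPP. intros Hn. destruct (nsupp_zero a b g x Hn (proj1 Hs)) as [e [He Hz]].
  apply (zero_nsupp a b (deriv_n a b g n) x e He); auto.
  intros y Hy Hyd. apply (loc_zero_deriv a b g x e); auto.
Qed.

Lemma deriv_nsupp a b g n x : a < b -> Icc a b x -> ~ supp a b g x -> deriv_n a b g n x = 0.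
Proof.
  intros Hab Hx Hn. destruct (nsupp_zero a b g x Hn Hx) as [e [He Hz]].
  apply (loc_zero_deriv a b g x e); auto. rewrite Rminus_diag, Rabs_R0; auto.
Qed.

Lemma supp_plus a b u v x : supp a b (fun y => u y + v y) x -> supp a b u x \/ supp a b v x.
Proof.
  intros Hs. apply NNPP. intros Hn. apply not_or_and in Hn as [Hu Hv].
  destruct (nsupp_zero a b u x Hu (proj1 Hs)) as [e1 [He1 H1]].
  destruct (nsupp_zero a b v x Hv (proj1 Hs)) as [e2 [He2 H2]].
  apply (zero_nsupp a b (fun y => u y + v y) x (Rmin e1 e2) (Rmin_pos _ _ He1 He2)); auto.
  intros y Hy Hyd. pose proof (Rmin_l e1 e2). pose proof (Rmin_r e1 e2). rewrite H1, H2; auto; lra.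
Qed.

Lemma supp_mult a b h u x : supp a b (fun y => h y * u y) x -> supp a b u x.
Proof.
  intros Hs. apply NNPP. intros Hn.
  destruct (nsupp_zero a b u x Hn (proj1 Hs)) as [e [He H]].
  apply (zero_nsupp a b (fun y => h y * u y) x e He); auto. intros y Hy Hyd. rewrite H; auto; ring.
Qed.

Lemma count_sub (A B : Z -> Prop) L : (forall k, A k -> B k) ->
  (forall l : list Z, NoDup l -> (forall k, In k l -> B k) -> INR (length l) <= L) ->
  (forall l : list Z, NoDup l -> (forall k, In k l -> A k) -> INR (length l) <= L).
Proof. intros HAB H l Hl Hin. apply H; auto. Qed.

Lemma part_b a b c k0 cs gs f : a < b -> (c = a \/ c = b) -> smooth a b f ->
  pliable_series a b c k0 cs gs -> sums_to a b k0 cs gs f ->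
  forall r : nat,
     deriv_n a b f r c = 0 /\
     pliable_series a b c k0 cs (fun k => deriv_n a b (gs k) r) /\
     sums_to a b k0 cs (fun k => deriv_n a b (gs k) r) (deriv_n a b f r) /\
     pliable a b c (deriv_n a b f r).
Proof.
  intros Hab Hc Hf HP Hsum r.
  destruct HP as (Hpos & Hsup & Hsm & Hlf & Hexp & L & HL & HJ).
  assert (Hsm' : forall k, (k0 <= k)%Z -> smooth a b (gs k)) by (intros; apply Hsm; auto).
  destruct (PS_conv_all a b k0 cs gs f Hab Hpos Hsup Hsm' Hexp Hsum Hf r) as [Hconv _].
  assert (Hcc : Icc a b c) by (unfold Icc; destruct Hc; subst; lra).
  assert (Hsums : sums_to a b k0 cs (fun k => deriv_n a b (gs k) r) (deriv_n a b f r)).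
  { intros x Hx. apply (is_lim_seq_ext (fun m => PS a b k0 cs gs r m x)); [|apply Hconv; auto].
    intros m. unfold partial_sum, PS, tt. rewrite sum_n_sumR. reflexivity. }
  assert (HPS : pliable_series a b c k0 cs (fun k => deriv_n a b (gs k) r)).
  { split; auto. split; auto. split.
    { intros k Hk. split. apply smooth_deriv_n, Hsm; auto.
      intros Hs. apply supp_deriv in Hs; auto. apply (proj2 (Hsm k Hk)); auto. }
    split.
    { intros x Hx Hxc. destruct (Hlf x Hx Hxc) as [d [Hd [N HN]]]. exists d. split; auto. exists N.
      intros k Hk HNk y Hy. apply (HN k); auto. apply supp_deriv in Hy; auto. }
    split.
    { intros s. destruct (Hexp (s + r)%nat) as [g [M HM]]. exists g, M. intros k Hk.
      eapply Rle_trans; [|apply (HM k Hk)]. rewrite !Rabs_mult.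
      apply Rmult_le_compat_l. apply Rabs_pos.
      rewrite !Rabs_right. apply Cnorm_deriv; auto.
      apply Rle_ge, Cnorm_nonneg; auto. apply Rle_ge, Cnorm_nonneg; auto. }
    exists L. split; auto. intros eps Heps. destruct (HJ eps Heps) as [HJ1 HJ2].
    assert (Hsub : forall k, Jeps a b c k0 (fun k => deriv_n a b (gs k) r) eps k -> Jeps a b c k0 gs eps k).
    { intros k [Hk [x [Hx Hxd]]]. split; auto. exists x. split; auto. apply supp_deriv in Hx; auto. }
    split.
    - intros l Hl Hin. apply HJ1; auto.
    - intros k Hk. apply HJ2, Hsub; auto. }
  split.
  - assert (H0 : is_lim_seq (fun m => PS a b k0 cs gs r m c) 0).
    { apply (is_lim_seq_ext (fun _ => 0)); [|apply is_lim_seq_const].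
      intros m. unfold PS. symmetry. induction m; cbn [sumR].
      - rewrite deriv_nsupp; auto. ring. apply Hsm, tt_ge.
      - rewrite <- IHm, deriv_nsupp; auto. ring. apply Hsm, tt_ge. }
    specialize (Hconv c Hcc). apply is_lim_seq_unique in Hconv. apply is_lim_seq_unique in H0.
    rewrite H0 in Hconv. congruence.
  - split; auto. split; auto. split; auto. split. apply smooth_deriv_n; auto.
    exists k0, cs, (fun k => deriv_n a b (gs k) r). auto.
Qed.

Lemma p2_le x y : x <= y -> pow2 x <= pow2 y.
Proof. intros H. unfold Defs.pow2. apply Rle_Rpower; lra. Qed.

Lemma NoDup_map_inj (g : Z -> Z) l : (forall x y, g x = g y -> x = y) -> NoDup l -> NoDup (map g l).
Proof.
  intros Hg Hl. induction Hl; simpl; constructor; auto.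
  intros Hin. apply in_map_iff in Hin as [y [E Hy]]. apply Hg in E. subst. auto.
Qed.

Lemma shift_series a b c k0 cs gs F (s : nat) : a < b ->
  pliable_series a b c k0 cs gs -> sums_to a b k0 cs gs F ->
  pliable_series a b c (k0 + Z.of_nat s) (fun k => cs (k - Z.of_nat s)%Z) (fun k => gs (k - Z.of_nat s)%Z) /\
  sums_to a b (k0 + Z.of_nat s) (fun k => cs (k - Z.of_nat s)%Z) (fun k => gs (k - Z.of_nat s)%Z) F.
Proof.
  intros Hab HP Hsum.
  destruct HP as (Hpos & Hsup & Hsm & Hlf & Hexp & L & HL & HJ).
  set (S := Z.of_nat s).
  assert (ES : forall n, (k0 + S + Z.of_nat n - S = k0 + Z.of_nat n)%Z) by (intros; lia).
  split.
  - split. { intros k Hk. apply Hpos. lia. }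
    split.
    { intros g. apply (is_lim_seq_ext (fun n => pow2 (IZR S * g) *
         (pow2 (IZR (k0 + Z.of_nat n) * g) * cs (k0 + Z.of_nat n)%Z))).
      - intros n. rewrite ES, <- Rmult_assoc, <- p2_plus. f_equal. f_equal.
        rewrite !plus_IZR. ring.
      - replace (Finite 0) with (Rbar_mult (pow2 (IZR S * g)) 0) by (simpl; f_equal; ring).
        apply is_lim_seq_scal_l. apply Hsup. }
    split. { intros k Hk. apply Hsm. lia. }
    split.
    { intros x Hx Hxc. destruct (Hlf x Hx Hxc) as [d [Hd [N HN]]]. exists d. split; auto.
      exists (N + S)%Z. intros k Hk HNk y Hy. apply (HN (k - S)%Z); auto; lia. }
    split.
    { intros r. destruct (Hexp r) as [g [M HM]]. exists g, (pow2 (IZR S * g) * M). intros k Hk.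
      specialize (HM (k - S)%Z ltac:(lia)).
      replace (pow2 (IZR k * g) * Cnorm a b r (gs (k - S)%Z)) with
        (pow2 (IZR S * g) * (pow2 (IZR (k - S) * g) * Cnorm a b r (gs (k - S)%Z))).
      + rewrite Rabs_mult, (Rabs_right (pow2 _)) by (apply Rle_ge, Rlt_le, p2_pos).
        apply Rmult_le_compat_l; auto. apply Rlt_le, p2_pos.
      + rewrite <- Rmult_assoc, <- p2_plus. f_equal. f_equal. rewrite minus_IZR. ring. }
    exists L. split; auto. intros eps Heps. destruct (HJ eps Heps) as [HJ1 HJ2].
    assert (Hsub : forall k, Jeps a b c (k0 + S) (fun k => gs (k - S)%Z) eps k -> Jeps a b c k0 gs eps (k - S)%Z).
    { intros k [Hk [x Hx]]. split. lia. exists x; auto. }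
    split.
    + intros l Hl Hin. rewrite <- (map_length (fun k => (k - S)%Z)). apply HJ1.
      * apply NoDup_map_inj; auto. intros; lia.
      * intros k Hk. apply in_map_iff in Hk as [k' [E Hk']]. subst. apply Hsub; auto.
    + intros k Hk. eapply Rle_trans; [|apply (HJ2 (k - S)%Z), Hsub; auto].
      apply p2_le. destruct Hk as [Hk _]. rewrite minus_IZR.
      assert (0 <= IZR S) by (apply IZR_le; lia). nra.
  - intros x Hx. apply (is_lim_seq_ext (fun m => partial_sum k0 cs gs m x)); auto.
    intros m. unfold partial_sum. rewrite !sum_n_sumR. apply sumR_ext. intros i _. rewrite ES. reflexivity.
Qed.

Lemma remove_len (K : Z) l : NoDup l -> (length l <= S (length (remove Z.eq_dec K l)))%nat.
Proof.
  induction 1; simpl. lia.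
  destruct (Z.eq_dec K x) as [->|Hne].
  - rewrite notin_remove; auto.
  - simpl. lia.
Qed.

Lemma NoDup_remove' (K : Z) l : NoDup l -> NoDup (remove Z.eq_dec K l).
Proof.
  induction 1; simpl. constructor. destruct (Z.eq_dec K x); auto.
  constructor; auto. intros Hin. apply in_remove in Hin as [Hin _]. auto.
Qed.

Lemma count_union1 (A : Z -> Prop) (K : Z) L :
  (forall l : list Z, NoDup l -> (forall k, In k l -> A k) -> INR (length l) <= L) ->
  forall l : list Z, NoDup l -> (forall k, In k l -> A k \/ k = K) -> INR (length l) <= L + 1.
Proof.
  intros H l Hl Hin.
  assert (H1 : INR (length (remove Z.eq_dec K l)) <= L).
  { apply H. apply NoDup_remove'; auto. intros k Hk. apply in_remove in Hk as [Hk Hne].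
    destruct (Hin k Hk); auto. congruence. }
  pose proof (remove_len K l Hl). apply le_INR in H0. rewrite S_INR in H0. lra.
Qed.

Lemma supp_far a b g c d x : (forall y, Icc a b y -> Rabs (y - c) < d -> g y = 0) ->
  supp a b g x -> d <= Rabs (x - c).
Proof.
  intros Hz [Hx Hs]. apply Rnot_lt_le. intros Hlt.
  destruct (Hs (d - Rabs (x - c))) as [y [Hy [Hyd Hg]]]. lra.
  apply Hg, Hz; auto. pose proof (Rabs_triang (y - x) (x - c)).
  replace (y - x + (x - c)) with (y - c) in H by ring. lra.
Qed.

Lemma supp_zero a b (u : R -> R) x : supp a b (fun y => 0 * u y) x -> False.
Proof. intros [_ Hs]. destruct (Hs 1) as [y [_ [_ Hy]]]. lra. apply Hy; ring. Qed.

Lemma Cnorm_zero a b r : a < b -> Cnorm a b r (fun _ => 0) <= 0.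
Proof.
  intros Hab. rewrite Cnorm_sum.
  assert (Z0 : sumR (fun _ => 0) r = 0) by (induction r; simpl; try rewrite IHr; ring).
  rewrite <- Z0. apply sumR_le. intros i _. apply sup0_le; try lra. intros x Hx.
  rewrite deriv_nsupp; auto. rewrite Rabs_R0; lra. intros [_ Hs]. destruct (Hs 1) as [y [_ [_ Hy]]]; lra.
Qed.

Lemma sumR_ind (n m : nat) : sumR (fun j => if Nat.eq_dec j n then 1 else 0) m = if le_dec n m then 1 else 0.
Proof.
  induction m; cbn [sumR].
  - repeat destruct (Nat.eq_dec _ _); repeat destruct (le_dec _ _); try reflexivity; lia.
  - rewrite IHm. repeat destruct (Nat.eq_dec _ _); repeat destruct (le_dec _ _); try lia; ring.
Qed.

Lemma part_c_core a b c k0 cs gs f h g : a < b -> (c = a \/ c = b) -> (0 <= k0)%Z ->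
  smooth a b f -> pliable_series a b c k0 cs gs -> sums_to a b k0 cs gs f ->
  smooth a b h -> smooth a b g -> ~ supp a b g c ->
  pliable a b c (fun x => h x * f x + g x).
Proof.
  intros Hab Hc Hk0 Hf HP Hsum Hh Hg Hgc.
  assert (Hcc : Icc a b c) by (unfold Icc; destruct Hc; subst; lra).
  destruct HP as (Hpos & Hsup & Hsm & Hlf & Hexp & L & HL & HJ).
  destruct (nsupp_zero a b g c Hgc Hcc) as [d [Hd Hgz]].
  destruct (pow_lt_1_zero (/ 2) ltac:(rewrite Rabs_right; lra) (d / 2)) as [n0 Hn0]. lra.
  set (K := (k0 + Z.of_nat n0)%Z).
  assert (HK : pow2 (- IZR K * (L + 1)) <= d / 2).
  { specialize (Hn0 n0 (le_n _)). rewrite Rabs_right in Hn0 by (apply Rle_ge, Rlt_le, half_pow_pos).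
    rewrite <- p2_opp_nat in Hn0. eapply Rle_trans; [|apply Rlt_le, Hn0]. apply p2_le.
    unfold K. rewrite IZR_tt. assert (0 <= IZR k0) by (apply IZR_le; lia).
    pose proof (pos_INR n0). nra. }
  set (e := fun k => if Z.eq_dec k K then / cs K else 0).
  set (gs' := fun k x => h x * gs k x + e k * g x).
  assert (Hsm' : forall k, (k0 <= k)%Z -> smooth a b (gs' k)).
  { intros k Hk. apply smooth_plus; auto. apply smooth_mult; auto. apply Hsm; auto. apply smooth_scal; auto. }
  assert (Hsupp : forall k x, supp a b (gs' k) x -> supp a b (gs k) x \/ (k = K /\ supp a b g x)).
  { intros k x Hs. apply supp_plus in Hs as [Hs|Hs].
    - left. apply supp_mult in Hs; auto.
    - right. unfold e in Hs. destruct (Z.eq_dec k K).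
      + split; auto. apply supp_mult in Hs; auto.
      + exfalso. apply (supp_zero a b g x Hs). }
  split; auto. split.
  { apply smooth_plus; auto. apply smooth_mult; auto. }
  exists k0, cs, gs'. split.
  - split; auto. split; auto. split.
    { intros k Hk. split; auto. intros Hs. apply Hsupp in Hs as [Hs|[_ Hs]].
      apply (proj2 (Hsm k Hk)); auto. auto. }
    split.
    { intros x Hx Hxc. destruct (Hlf x Hx Hxc) as [d1 [Hd1 [N HN]]]. exists d1. split; auto.
      exists (Z.max N (K + 1)). intros k Hk HNk y Hy. apply Hsupp in Hy as [Hy|[E _]].
      apply (HN k); auto; lia. lia. }
    split.
    { intros r. destruct (Hexp r) as [gm [M HM]].
      destruct (Cnorm_mult_bound a b Hab r h Hh) as [Kh [HKh HKhb]].
      set (C0 := Cnorm a b r (fun x => / cs K * g x)).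
      assert (HC0 : 0 <= C0) by (apply Cnorm_nonneg; auto).
      exists gm, (Kh * M + pow2 (IZR K * gm) * C0). intros k Hk.
      assert (Hsk : smooth a b (gs k)) by (apply Hsm; auto).
      assert (Hb1 : Cnorm a b r (gs' k) <= Kh * Cnorm a b r (gs k) + (if Z.eq_dec k K then C0 else 0)).
      { eapply Rle_trans. apply Cnorm_plus; auto. apply smooth_mult; auto. apply smooth_scal; auto.
        apply Rplus_le_compat. apply HKhb; auto.
        unfold e. destruct (Z.eq_dec k K). unfold C0; lra.
        rewrite (Cnorm_ext a b r _ (fun _ => 0)). apply Cnorm_zero; auto. intros; ring. }
      pose proof (Cnorm_nonneg a b Hab r (gs' k)). pose proof (Cnorm_nonneg a b Hab r (gs k)).
      pose proof (p2_pos (IZR k * gm)). specialize (HM k Hk).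
      rewrite Rabs_mult, Rabs_right in HM by lra. rewrite Rabs_mult, !Rabs_right by lra.
      rewrite Rabs_right in HM by lra.
      assert (pow2 (IZR k * gm) * Cnorm a b r (gs' k) <=
              Kh * (pow2 (IZR k * gm) * Cnorm a b r (gs k)) + pow2 (IZR k * gm) * (if Z.eq_dec k K then C0 else 0)).
      { apply (Rmult_le_compat_l (pow2 (IZR k * gm))) in Hb1; lra. }
      assert (Kh * (pow2 (IZR k * gm) * Cnorm a b r (gs k)) <= Kh * M) by (apply Rmult_le_compat_l; auto).
      assert (pow2 (IZR k * gm) * (if Z.eq_dec k K then C0 else 0) <= pow2 (IZR K * gm) * C0).
      { destruct (Z.eq_dec k K) as [->|]. lra. pose proof (p2_pos (IZR K * gm)). nra. }
      lra. }
    exists (L + 1). split. lra. intros eps Heps. destruct (HJ eps Heps) as [HJ1 HJ2].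
    assert (Hsub : forall k, Jeps a b c k0 gs' eps k -> Jeps a b c k0 gs eps k \/ (k = K /\ d / 2 <= eps)).
    { intros k [Hk [x [Hx Hxd]]]. apply Hsupp in Hx as [Hx|[E Hx]].
      - left. split; auto. exists x; auto.
      - right. split; auto. pose proof (supp_far a b g c d x Hgz Hx). lra. }
    split.
    + intros l Hl Hin. apply (count_union1 (Jeps a b c k0 gs eps) K L HJ1 l Hl).
      intros k Hk. destruct (Hsub k (Hin k Hk)) as [H|[H _]]; auto.
    + intros k Hk. destruct (Hsub k Hk) as [H|[-> H]].
      * eapply Rle_trans; [|apply (HJ2 k); auto]. apply p2_le. destruct H as [Hk' _].
        assert (0 <= IZR k) by (apply IZR_le; lia). assert (- IZR k * (L + 1) = - IZR k * L - IZR k) by ring. lra.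
      * lra.
  - intros x Hx.
    apply (is_lim_seq_ext_loc (fun m => h x * partial_sum k0 cs gs m x + g x)).
    + exists n0. intros m Hm. unfold partial_sum. rewrite !sum_n_sumR.
      transitivity (h x * sumR (fun n => cs (k0 + Z.of_nat n)%Z * gs (k0 + Z.of_nat n)%Z x) m +
                    g x * sumR (fun j => if Nat.eq_dec j n0 then 1 else 0) m).
      * rewrite sumR_ind. destruct (le_dec n0 m); [ring|lia].
      * rewrite <- !sumR_scal, <- sumR_plus. apply sumR_ext. intros j _. unfold gs', e.
        destruct (Z.eq_dec (k0 + Z.of_nat j) K), (Nat.eq_dec j n0); unfold K in *; try lia.
        -- subst. field. apply Rgt_not_eq, Hpos. lia.
        -- ring.
    + apply is_lim_seq_plus'. apply (is_lim_seq_scal_l _ (h x) (f x)). apply Hsum; auto.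
      apply is_lim_seq_const.
Qed.

Lemma abs_sq a b : Rabs a = Rabs b -> a * a = b * b.
Proof. unfold Rabs. repeat destruct Rcase_abs; intros; subst; nra. Qed.

Lemma iso_affine (iota : R -> R) : (forall x y, Rabs (iota x - iota y) = Rabs (x - y)) ->
  exists u t, (u = 1 \/ u = -1) /\ iota = (fun x => u * x + t).
Proof.
  intros H. set (t := iota 0). set (u := iota 1 - t).
  assert (Hu : Rabs u = 1). { unfold u, t. rewrite H. rewrite Rminus_0_r, Rabs_R1. reflexivity. }
  assert (Hu' : u = 1 \/ u = -1) by (unfold Rabs in Hu; destruct Rcase_abs; [right|left]; lra).
  exists u, t. split; auto.
  apply functional_extensionality. intros x.
  assert (H1 := abs_sq _ _ (H x 0)). assert (H2 := abs_sq _ _ (H x 1)). fold t in H1.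
  replace (iota 1) with (u + t) in H2 by (unfold u; ring).
  assert (u * (iota x - t) = x) by (destruct Hu'; rewrite H0 in *; nra).
  destruct Hu'; rewrite H3 in *; lra.
Qed.

Section Aff.
Variables (a b a' b' u t : R).
Hypothesis Hab : a < b.
Hypothesis Hab' : a' < b'.
Hypothesis Hu : u = 1 \/ u = -1.
Hypothesis HI : forall x, Icc a' b' x <-> Icc a b (u * x + t).

Let io x := u * x + t.
Let ioinv y := (y - t) / u.

Lemma u_nz : u <> 0.
Proof. destruct Hu; lra. Qed.
Lemma abs_u : Rabs u = 1.
Proof. destruct Hu as [E|E]; rewrite E; unfold Rabs; destruct Rcase_abs; lra. Qed.
Lemma io_inv y : io (ioinv y) = y.
Proof. unfold io, ioinv. field. apply u_nz. Qed.
Lemma io_dist x y : Rabs (io x - io y) = Rabs (x - y).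
Proof. unfold io. replace (u * x + t - (u * y + t)) with (u * (x - y)) by ring.
  rewrite Rabs_mult, abs_u. ring. Qed.
Lemma io_inj x y : io x = io y -> x = y.
Proof. intros E. pose proof (io_dist x y). rewrite E, Rminus_diag, Rabs_R0 in H. 
  destruct (Req_dec x y); auto. exfalso. assert (x - y <> 0) by lra. apply Rabs_no_R0 in H1. lra. Qed.

Lemma lengths : b' - a' = b - a /\ ((io a' = a /\ io b' = b) \/ (io a' = b /\ io b' = a)).
Proof.
  assert (Ha' : Icc a b (io a')) by (apply HI; unfold Icc; lra).
  assert (Hb' : Icc a b (io b')) by (apply HI; unfold Icc; lra).
  assert (Ha : Icc a' b' (ioinv a)) by (apply HI; fold (io (ioinv a)); rewrite io_inv; unfold Icc; lra).
  assert (Hb : Icc a' b' (ioinv b)) by (apply HI; fold (io (ioinv b)); rewrite io_inv; unfold Icc; lra).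
  unfold Icc, io, ioinv in *. destruct Hu as [E | E]; rewrite E in *.
  - rewrite !Rdiv_1_r in *. split; [|left]; lra.
  - replace ((a - t) / -1) with (t - a) in * by field. replace ((b - t) / -1) with (t - b) in * by field.
    split; [|right]; lra.
Qed.

Lemma dw_io F x l : Icc a' b' x -> is_derive_within a b F (io x) l ->
  is_derive_within a' b' (fun y => F (io y)) x (l * u).
Proof.
  intros Hx H. apply (dw_comp a b a' b' F io x l u); auto.
  - intros y Hy. apply HI; auto.
  - intros y _ E. apply io_inj; auto.
  - assert (Hd : is_derive_within a' b' (fun y => u * y + t) x (u * 1 + 0)).
    { apply dw_plus. apply dw_scal, dw_id. apply dw_const. }
    replace (u * 1 + 0) with u in Hd by ring. exact Hd.
Qed.

Lemma deriv_io F : smooth a b F -> forall n x, Icc a' b' x ->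
  deriv_n a' b' (fun y => F (io y)) n x = u ^ n * deriv_n a b F n (io x).
Proof.
  intros HF n. induction n; intros x Hx. simpl. ring.
  simpl. apply Dw_eq; auto.
  apply (dw_ext a' b' (fun y => u ^ n * deriv_n a b F n (io y))); auto.
  intros; symmetry; auto.
  replace (u * u ^ n * Dw a b (deriv_n a b F n) (io x)) with (u ^ n * (Dw a b (deriv_n a b F n) (io x) * u)) by ring.
  apply dw_scal, dw_io; auto. apply Dw_diff; auto. apply HI; auto.
  apply smooth_diff, smooth_deriv_n; auto.
Qed.

Lemma smooth_io F : smooth a b F -> smooth a' b' (fun y => F (io y)).
Proof.
  intros HF n x Hx. exists (u ^ n * (deriv_n a b F (S n) (io x) * u)).
  apply (dw_ext a' b' (fun y => u ^ n * deriv_n a b F n (io y))); auto.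
  intros; symmetry; apply deriv_io; auto.
  apply dw_scal, dw_io; auto. apply Dw_diff; auto. apply HI; auto.
  apply smooth_diff, smooth_deriv_n; auto.
Qed.

Lemma supp_io g x : supp a' b' (fun y => g (io y)) x <-> supp a b g (io x).
Proof.
  split.
  - intros [Hx Hs]. split. apply HI; auto. intros eps Heps. destruct (Hs eps Heps) as [y [Hy [Hyd Hg]]].
    exists (io y). split. apply HI; auto. split; auto. rewrite io_dist; auto.
  - intros [Hx Hs]. split. apply HI; auto. intros eps Heps. destruct (Hs eps Heps) as [z [Hz [Hzd Hg]]].
    exists (ioinv z). rewrite io_inv. split. apply HI. fold (io (ioinv z)). rewrite io_inv; auto.
    split; auto. rewrite <- io_dist, io_inv; auto.
Qed.

Lemma sup0_io G n : sup0 a' b' (fun x => u ^ n * G (io x)) = sup0 a b G.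
Proof.
  unfold sup0. f_equal. f_equal. apply functional_extensionality; intros y.
  apply propositional_extensionality. split.
  - intros [x [Hx ->]]. exists (io x). split. apply HI; auto. rewrite Rabs_mult, <- RPow_abs, abs_u, pow1. ring.
  - intros [z [Hz ->]]. exists (ioinv z). split. apply HI. fold (io (ioinv z)). rewrite io_inv; auto.
    rewrite io_inv, Rabs_mult, <- RPow_abs, abs_u, pow1. ring.
Qed.

Lemma Cnorm_io g r : smooth a b g -> Cnorm a' b' r (fun y => g (io y)) = Cnorm a b r g.
Proof.
  intros Hg. rewrite !Cnorm_sum. apply sumR_ext. intros i _.
  rewrite (sup0_ext a' b' _ (fun x => u ^ i * deriv_n a b g i (io x))).
  apply sup0_io. intros; apply deriv_io; auto.
Qed.

Lemma part_d_core c c' k0 cs gs f : (c = a \/ c = b) -> io c' = c -> smooth a b f ->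
  pliable_series a b c k0 cs gs -> sums_to a b k0 cs gs f ->
  pliable a' b' c' (fun x => f (io x)).
Proof.
  intros Hc Hc' Hf HP Hsum. destruct lengths as [Hlen Hend].
  destruct HP as (Hpos & Hsup & Hsm & Hlf & Hexp & L & HL & HJ).
  split.
  { destruct Hend as [[E1 E2]|[E1 E2]]; destruct Hc as [Hc|Hc]; subst c;
    [left|right|right|left]; apply io_inj; congruence. }
  split. apply smooth_io; auto.
  exists k0, cs, (fun k x => gs k (io x)). split.
  - split; auto. split; auto. split.
    { intros k Hk. split. apply smooth_io, Hsm; auto. rewrite supp_io, Hc'. apply Hsm; auto. }
    split.
    { intros x Hx Hxc. destruct (Hlf (io x)) as [d [Hd [N HN]]]. apply HI; auto.
      intros E. apply Hxc, io_inj. congruence.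
      exists d. split; auto. exists N. intros k Hk HNk y Hy. rewrite <- io_dist.
      apply (HN k); auto. apply supp_io; auto. }
    split.
    { intros r. destruct (Hexp r) as [g [M HM]]. exists g, M. intros k Hk.
      rewrite Cnorm_io. auto. apply Hsm; auto. }
    exists L. split; auto. intros eps Heps. rewrite Hlen in Heps. destruct (HJ eps Heps) as [HJ1 HJ2].
    assert (HJe : forall k, Jeps a' b' c' k0 (fun k x => gs k (io x)) eps k -> Jeps a b c k0 gs eps k).
    { intros k [Hk [x [Hx Hxd]]]. split; auto. exists (io x). split. apply supp_io; auto.
      rewrite <- Hc', io_dist. auto. }
    split.
    + intros l Hl Hin. apply HJ1; auto.
    + intros k Hk. apply HJ2, HJe; auto.
  - intros x Hx. apply (is_lim_seq_ext (fun m => partial_sum k0 cs gs m (io x))).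
    reflexivity. apply Hsum, HI; auto.
Qed.

End Aff.

Lemma fermat_min (a' b' : R) (h : R -> R) (x0 l : R) : a' < x0 < b' -> is_derive_within a' b' h x0 l ->
  (forall x, Icc a' b' x -> h x0 <= h x) -> l = 0.
Proof.
  intros Hx0 Hd Hmin. pose proof (proj1 (dw_iff _ _ _ _ _) Hd) as Hd0. clear Hd. rename Hd0 into Hd.
  destruct (Rtotal_order l 0) as [Hl|[Hl|Hl]]; auto; exfalso.
  - destruct (Hd (- l / 2)) as [del [Hdel H]]. lra.
    set (t := Rmin del (b' - x0) / 2).
    assert (0 < t /\ t < del /\ t < b' - x0).
    { unfold t. pose proof (Rmin_l del (b' - x0)). pose proof (Rmin_r del (b' - x0)).
      assert (0 < Rmin del (b' - x0)) by (apply Rmin_pos; lra). lra. }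
    specialize (H (x0 + t) ltac:(unfold Icc; lra) ltac:(lra) ltac:(rewrite Rabs_right; lra)).
    specialize (Hmin (x0 + t) ltac:(unfold Icc; lra)).
    replace (x0 + t - x0) with t in H by ring.
    assert (0 <= (h (x0 + t) - h x0) / t) by (apply Rdiv_le_0_compat; lra).
    unfold Rabs in H; destruct Rcase_abs in H; lra.
  - destruct (Hd (l / 2)) as [del [Hdel H]]. lra.
    set (t := Rmin del (x0 - a') / 2).
    assert (0 < t /\ t < del /\ t < x0 - a').
    { unfold t. pose proof (Rmin_l del (x0 - a')). pose proof (Rmin_r del (x0 - a')).
      assert (0 < Rmin del (x0 - a')) by (apply Rmin_pos; lra). lra. }
    specialize (H (x0 - t) ltac:(unfold Icc; lra) ltac:(lra) ltac:(rewrite Rabs_left; lra)).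
    specialize (Hmin (x0 - t) ltac:(unfold Icc; lra)).
    replace (x0 - t - x0) with (- t) in H by ring.
    assert ((h (x0 - t) - h x0) / - t <= 0).
    { unfold Rdiv. rewrite <- Ropp_inv_permute by lra. assert (0 < / t) by (apply Rinv_0_lt_compat; lra). nra. }
    unfold Rabs in H; destruct Rcase_abs in H; lra.
Qed.

Section Diffeo.
Variables (a b a' b' : R) (d e : R -> R).
Hypothesis Hab : a < b.
Hypothesis Hab' : a' < b'.
Hypothesis Hd : smooth a' b' d.
Hypothesis He : smooth a b e.
Hypothesis Hde : forall x, Icc a' b' x -> Icc a b (d x) /\ e (d x) = x.
Hypothesis Hed : forall y, Icc a b y -> Icc a' b' (e y) /\ d (e y) = y.

Lemma d_inj x y : Icc a' b' x -> Icc a' b' y -> d x = d y -> x = y.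
Proof. intros Hx Hy E. rewrite <- (proj2 (Hde x Hx)), <- (proj2 (Hde y Hy)), E. reflexivity. Qed.
Lemma e_inj x y : Icc a b x -> Icc a b y -> e x = e y -> x = y.
Proof. intros Hx Hy E. rewrite <- (proj2 (Hed x Hx)), <- (proj2 (Hed y Hy)), E. reflexivity. Qed.

Lemma dw_compd F x l : Icc a' b' x -> is_derive_within a b F (d x) l ->
  is_derive_within a' b' (fun y => F (d y)) x (l * Dw a' b' d x).
Proof.
  intros Hx HF. apply (dw_comp a b a' b' F d x); auto.
  - intros y Hy; apply Hde; auto.
  - intros y Hy E. apply d_inj; auto.
  - apply Dw_diff; auto. apply smooth_diff; auto.
Qed.

Lemma Dw_compd F x : Icc a' b' x -> diffJ a b F ->
  Dw a' b' (fun y => F (d y)) x = Dw a b F (d x) * Dw a' b' d x.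
Proof.
  intros Hx HF. apply Dw_eq; auto. apply dw_compd; auto. apply Dw_diff; auto. apply Hde; auto.
Qed.

Lemma Sm_comp n : forall F, Sm n a b F -> Sm n a' b' (fun y => F (d y)).
Proof.
  induction n; intros F HF.
  - apply Sm_0. apply Sm_0 in HF. intros x Hx. eexists. apply dw_compd; auto.
    apply Dw_diff; auto. apply Hde; auto.
  - apply Sm_S in HF as [HF0 HF]. apply Sm_S. split.
    + intros x Hx. eexists. apply dw_compd; auto. apply Dw_diff; auto. apply Hde; auto.
    + apply (Sm_ext a' b' (fun y => Dw a b F (d y) * Dw a' b' d y)).
      * intros z Hz. symmetry. apply Dw_compd; auto.
      * apply Sm_mult; auto. apply smooth_Sm, smooth_Dw; auto.
Qed.

Lemma smooth_comp F : smooth a b F -> smooth a' b' (fun y => F (d y)).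
Proof. intros HF. apply smooth_Sm. intros n. apply Sm_comp. apply smooth_Sm; auto. Qed.

Lemma Cnorm_comp r : exists C, 0 <= C /\ forall g, smooth a b g ->
  Cnorm a' b' r (fun y => g (d y)) <= C * Cnorm a b r g.
Proof.
  assert (Hs0 : forall g, smooth a b g -> sup0 a' b' (fun y => g (d y)) <= sup0 a b g).
  { intros g Hg. apply sup0_le; try lra. intros x Hx. apply sup0_ge. apply smooth_bnd; auto. apply Hde; auto. }
  induction r.
  - exists 1. split. lra. intros g Hg. rewrite !Cnorm_0; auto. rewrite Rmult_1_l. apply Hs0; auto.
  - destruct IHr as [C [HC HCb]].
    destruct (Cnorm_mult_bound a' b' Hab' r (Dw a' b' d) (smooth_Dw _ _ _ Hd)) as [K1 [HK1 HK1b]].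
    exists (1 + K1 * C). split. nra. intros g Hg.
    rewrite Cnorm_S; auto.
    rewrite (Cnorm_ext a' b' r _ (fun y => Dw a' b' d y * Dw a b g (d y))).
    2:{ intros x Hx. rewrite Dw_compd; auto. ring. apply smooth_diff; auto. }
    pose proof (HK1b (fun y => Dw a b g (d y)) (smooth_comp _ (smooth_Dw _ _ _ Hg))).
    pose proof (HCb (Dw a b g) (smooth_Dw _ _ _ Hg)).
    pose proof (Cnorm_Dw a b Hab r g). pose proof (Hs0 g Hg). pose proof (Cnorm_sup_le a b Hab (S r) g).
    pose proof (Cnorm_nonneg a b Hab (S r) g). pose proof (Cnorm_nonneg a b Hab r (Dw a b g)).
    assert (K1 * (C * Cnorm a b r (Dw a b g)) <= K1 * (C * Cnorm a b (S r) g)).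
    { apply Rmult_le_compat_l; auto. apply Rmult_le_compat_l; auto. }
    nra.
Qed.

Lemma supp_comp g x : Icc a' b' x -> (supp a' b' (fun y => g (d y)) x <-> supp a b g (d x)).
Proof.
  intros Hx. split.
  - intros [_ Hs]. split. apply Hde; auto. intros eps Heps.
    destruct (diff_contJ a' b' d (smooth_diff _ _ _ Hd) x Hx eps Heps) as [del [Hdel Hc]].
    destruct (Hs del Hdel) as [y [Hy [Hyd Hg]]]. exists (d y). split. apply Hde; auto. split; auto.
  - intros [Hdx Hs]. split; auto. intros eps Heps.
    destruct (diff_contJ a b e (smooth_diff _ _ _ He) (d x) Hdx eps Heps) as [del [Hdel Hc]].
    destruct (Hs del Hdel) as [z [Hz [Hzd Hg]]]. exists (e z).
    destruct (Hed z Hz) as [Hez Hdez]. split; auto. split.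
    + rewrite <- (proj2 (Hde x Hx)). apply Hc; auto.
    + rewrite Hdez; auto.
Qed.

Lemma Dd_nz x : Icc a' b' x -> Dw a' b' d x <> 0.
Proof.
  intros Hx E.
  assert (H1 : is_derive_within a' b' (fun y => e (d y)) x (Dw a b e (d x) * Dw a' b' d x)).
  { apply dw_compd; auto. apply Dw_diff; auto. apply Hde; auto. apply smooth_diff; auto. }
  assert (H2 : is_derive_within a' b' (fun y => e (d y)) x 1).
  { apply (dw_ext a' b' (fun y => y)); auto. intros y Hy. symmetry; apply Hde; auto. apply dw_id. }
  pose proof (dw_unique _ _ _ _ _ _ Hab' Hx H1 H2). rewrite E in H. lra.
Qed.

Lemma endpoint_map y : (y = a \/ y = b) -> (e y = a' \/ e y = b').
Proof.
  intros Hy. assert (Hyi : Icc a b y) by (unfold Icc; destruct Hy; subst; lra).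
  destruct (Hed y Hyi) as [Hey Hdey].
  destruct (Req_dec (e y) a') as [|Ha]; auto. destruct (Req_dec (e y) b') as [|Hb]; auto. exfalso.
  assert (Hin : a' < e y < b') by (unfold Icc in Hey; lra).
  apply (Dd_nz (e y) Hey).
  destruct Hy as [Hy|Hy].
  - apply (fermat_min a' b' d (e y)); auto. apply Dw_diff; auto. apply smooth_diff; auto.
    intros x Hx. rewrite Hdey, Hy. apply Hde; auto.
  - assert (HH : (-1) * Dw a' b' d (e y) = 0).
    { apply (fermat_min a' b' (fun x => -1 * d x) (e y)); auto.
      apply dw_scal. apply Dw_diff; auto. apply smooth_diff; auto.
      intros x Hx. rewrite Hdey, Hy. pose proof (proj1 (Hde x Hx)). unfold Icc in H. lra. }
    lra.
Qed.

Lemma lip_d : exists Cd, 1 <= Cd /\ forall x y, Icc a' b' x -> Icc a' b' y -> Rabs (d x - d y) <= Cd * Rabs (x - y).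
Proof.
  destruct (smooth_bnd a' b' Hab' _ (smooth_Dw _ _ _ Hd)) as [B HB].
  exists (Rmax 1 B). split. apply Rmax_l. intros x y Hx Hy.
  rewrite Rabs_minus_sym, (Rabs_minus_sym x).
  apply (MVI a' b' d (Dw a' b' d)); auto.
  - intros z Hz. apply Dw_diff; auto. apply smooth_diff; auto.
  - intros z Hz. eapply Rle_trans. apply HB; auto. apply Rmax_r.
Qed.

Lemma lip_e : exists Ce, 1 <= Ce /\ forall x y, Icc a b x -> Icc a b y -> Rabs (e x - e y) <= Ce * Rabs (x - y).
Proof.
  destruct (smooth_bnd a b Hab _ (smooth_Dw _ _ _ He)) as [B HB].
  exists (Rmax 1 B). split. apply Rmax_l. intros x y Hx Hy.
  rewrite Rabs_minus_sym, (Rabs_minus_sym x).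
  apply (MVI a b e (Dw a b e)); auto.
  - intros z Hz. apply Dw_diff; auto. apply smooth_diff; auto.
  - intros z Hz. eapply Rle_trans. apply HB; auto. apply Rmax_r.
Qed.

End Diffeo.

Lemma dyadic m : forall T rho, 0 < T -> rho <= T -> T * (/ 2) ^ (S m) <= rho ->
  exists i, (i <= m)%nat /\ T * (/ 2) ^ (S i) <= rho /\ rho <= 2 * (T * (/ 2) ^ (S i)).
Proof.
  induction m; intros T rho HT H1 H2.
  - exists 0%nat. split; auto. simpl in *. split; lra.
  - destruct (Rle_dec (T * / 2) rho).
    + exists 0%nat. split. lia. simpl. split; lra.
    + destruct (IHm (T * / 2) rho) as [i [Hi [Hi1 Hi2]]]; try lra.
      replace (T * / 2 * (/ 2) ^ S m) with (T * (/ 2) ^ S (S m)) by (simpl; ring). auto.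
      exists (S i). split. lia. replace (T * (/ 2) ^ S (S i)) with (T * / 2 * (/ 2) ^ S i) by (simpl; ring).
      split; auto.
Qed.

Lemma filter_len (p : Z -> bool) l : length l = (length (filter p l) + length (filter (fun x => negb (p x)) l))%nat.
Proof. induction l; simpl. auto. destruct (p a); simpl; lia. Qed.

Lemma count_union (A : nat -> Z -> Prop) L m :
  (forall i, (i <= m)%nat -> forall l : list Z, NoDup l -> (forall k, In k l -> A i k) -> INR (length l) <= L) ->
  forall l : list Z, NoDup l -> (forall k, In k l -> exists i, (i <= m)%nat /\ A i k) -> INR (length l) <= INR (S m) * L.
Proof.
  induction m; intros HA l Hl Hin.
  - simpl. rewrite Rmult_1_l. apply (HA 0%nat); auto. intros k Hk. destruct (Hin k Hk) as [i [Hi H]].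
    replace i with 0%nat in H by lia. auto.
  - set (p := fun k => if excluded_middle_informative (A (S m) k) then true else false).
    rewrite (filter_len p), plus_INR, S_INR.
    assert (H1 : INR (length (filter p l)) <= L).
    { apply (HA (S m)); auto. apply NoDup_filter; auto. intros k Hk. apply filter_In in Hk as [_ Hk].
      unfold p in Hk. destruct excluded_middle_informative; auto; discriminate. }
    assert (H2 : INR (length (filter (fun x => negb (p x)) l)) <= INR (S m) * L).
    { apply IHm. intros i Hi; apply HA; lia. apply NoDup_filter; auto. intros k Hk. apply filter_In in Hk as [Hk Hk'].
      unfold p in Hk'. destruct excluded_middle_informative; try discriminate.
      destruct (Hin k Hk) as [i [Hi H]]. exists i. split; auto. destruct (Nat.eq_dec i (S m)); [subst; contradiction|lia]. }
    lra.
Qed.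

Lemma half_pow_le1 i : (/ 2) ^ i <= 1.
Proof. induction i; simpl. lra. pose proof (half_pow_pos i). nra. Qed.

Section E.
Variables (a b a' b' : R) (d e : R -> R).
Hypothesis Hab : a < b.
Hypothesis Hab' : a' < b'.
Hypothesis Hd : smooth a' b' d.
Hypothesis He : smooth a b e.
Hypothesis Hde : forall x, Icc a' b' x -> Icc a b (d x) /\ e (d x) = x.
Hypothesis Hed : forall y, Icc a b y -> Icc a' b' (e y) /\ d (e y) = y.

Lemma ends_sum (lo hi p q y : R) : lo < hi -> ((p = lo /\ q = hi) \/ (p = hi /\ q = lo)) -> Icc lo hi y ->
  Rabs (y - p) + Rabs (y - q) = hi - lo.
Proof. intros Hlh [[-> ->]|[-> ->]] Hy; unfold Icc in Hy; unfold Rabs; repeat destruct Rcase_abs; lra. Qed.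

Lemma part_e_core c k0 cs gs f Cd :
  (c = a \/ c = b) -> smooth a b f -> pliable_series a b c k0 cs gs -> sums_to a b k0 cs gs f ->
  1 <= Cd -> (forall x y, Icc a' b' x -> Icc a' b' y -> Rabs (d x - d y) <= Cd * Rabs (x - y)) ->
  (0 <= k0)%Z -> 2 * Cd <= pow2 (IZR k0) ->
  pliable a' b' (e c) (fun x => f (d x)).
Proof.
  intros Hc Hf HP Hsum HCd Hlipd Hk0 Hk0C.
  destruct HP as (Hpos & Hsup & Hsm & Hlf & Hexp & L & HL & HJ).
  assert (Hcc : Icc a b c) by (unfold Icc; destruct Hc; subst; lra).
  destruct (Hed c Hcc) as [Hec Hdec].
  destruct (lip_e a b e Hab He) as [Ce [HCe Hlipe]].
  set (cf := if Req_EM_T c a then b else a).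
  assert (Hcf : (c = a /\ cf = b) \/ (c = b /\ cf = a)).
  { unfold cf. destruct (Req_EM_T c a); [left|right]; split; auto. destruct Hc; auto; contradiction. }
  assert (Hcfi : Icc a b cf) by (unfold Icc; destruct Hcf as [[_ ->]|[_ ->]]; lra).
  destruct (Hed cf Hcfi) as [Hecf Hdecf].
  assert (Hends : (e c = a' /\ e cf = b') \/ (e c = b' /\ e cf = a')).
  { assert (E1 := endpoint_map a b a' b' d e Hab Hab' Hd He Hde Hed c Hc).
    assert (E2 := endpoint_map a b a' b' d e Hab Hab' Hd He Hde Hed cf ltac:(destruct Hcf as [[_ ->]|[_ ->]]; auto)).
    assert (Hne : e c <> e cf).
    { intros E. apply (e_inj a b a' b' d e Hed) in E; auto. destruct Hcf as [[-> ->]|[-> ->]]; lra. }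
    destruct E1 as [E1|E1], E2 as [E2|E2]; rewrite E1, E2 in *; try contradiction; auto. }
  assert (HcfJ : (c = a /\ cf = b) \/ (c = b /\ cf = a)) by exact Hcf.
  destruct (pow_lt_1_zero (/ 2) ltac:(rewrite Rabs_right; lra) (/ (2 * Cd * Ce))) as [m Hm].
  { apply Rinv_0_lt_compat. nra. }
  assert (Hm' : (/ 2) ^ (S m) * (2 * Cd * Ce) <= 1).
  { specialize (Hm (S m) ltac:(lia)). rewrite Rabs_right in Hm by (apply Rle_ge, Rlt_le, half_pow_pos).
    apply Rmult_lt_compat_r with (r := 2 * Cd * Ce) in Hm; [|nra].
    rewrite Rinv_l in Hm by nra. lra. }
  split. { apply (endpoint_map a b a' b' d e); auto. }
  split. { apply (smooth_comp a b a' b' d e); auto. }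
  exists k0, cs, (fun k y => gs k (d y)). split.
  - split; auto. split; auto. split.
    { intros k Hk. split. apply (smooth_comp a b a' b' d e); auto. apply Hsm; auto.
      rewrite (supp_comp a b a' b' d e); auto. rewrite Hdec. apply Hsm; auto. }
    split.
    { intros x Hx Hxc. destruct (Hde x Hx) as [Hdx Hedx].
      destruct (Hlf (d x) Hdx) as [del [Hdel [N HN]]].
      { intros E. apply Hxc. rewrite <- Hedx, E. reflexivity. }
      destruct (diff_contJ a' b' d (smooth_diff _ _ _ Hd) x Hx del Hdel) as [del' [Hdel' Hc']].
      exists del'. split; auto. exists N. intros k Hk HNk y Hy.
      assert (Hyi : Icc a' b' y) by (destruct Hy; auto).
      apply (supp_comp a b a' b' d e) in Hy; auto.
      specialize (HN k Hk HNk (d y) Hy). apply Rnot_lt_le. intros Hlt.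
      specialize (Hc' y Hyi Hlt). lra. }
    split.
    { intros r. destruct (Hexp r) as [g [M HM]].
      destruct (Cnorm_comp a b a' b' d e Hab Hab' Hd Hde r) as [C [HC HCb]].
      exists g, (C * M). intros k Hk. specialize (HM k Hk).
      pose proof (HCb (gs k) (proj1 (Hsm k Hk))). pose proof (p2_pos (IZR k * g)).
      pose proof (Cnorm_nonneg a' b' Hab' r (fun y => gs k (d y))). pose proof (Cnorm_nonneg a b Hab r (gs k)).
      rewrite Rabs_mult, Rabs_right in * by lra. rewrite Rabs_right in HM by lra.
      rewrite Rabs_right by lra.
      assert (pow2 (IZR k * g) * Cnorm a' b' r (fun y => gs k (d y)) <= pow2 (IZR k * g) * (C * Cnorm a b r (gs k))).
      { apply Rmult_le_compat_l; lra. }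
      assert (C * (pow2 (IZR k * g) * Cnorm a b r (gs k)) <= C * M) by (apply Rmult_le_compat_l; auto).
      nra. }
    exists (INR (S m) * L + 1). split. { pose proof (pos_INR (S m)). nra. }
    intros eps Heps.
    set (eta := (b' - a' - 2 * eps) / Ce).
    assert (Heta : 0 < eta) by (unfold eta; apply Rdiv_lt_0_compat; lra).
    set (T := Rmin (2 * Cd * eps) (b - a - eta)).
    assert (HT1 : T <= 2 * Cd * eps) by apply Rmin_l.
    assert (HT2 : T <= b - a - eta) by apply Rmin_r.
    set (A := fun i k => Jeps a b c k0 gs (T * (/ 2) ^ (S i)) k /\ 0 < 2 * (T * (/ 2) ^ (S i)) < b - a).
    assert (Key : forall k, Jeps a' b' (e c) k0 (fun k y => gs k (d y)) eps k -> exists i, (i <= m)%nat /\ A i k).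
    { intros k [Hk [x [Hx Hxd]]].
      assert (Hxi : Icc a' b' x) by (destruct Hx; auto).
      destruct (Hde x Hxi) as [Hdx Hedx].
      apply (supp_comp a b a' b' d e) in Hx; auto.
      set (rho := Rabs (d x - c)).
      assert (R1 : rho <= 2 * Cd * eps).
      { unfold rho. rewrite <- Hdec at 1. eapply Rle_trans. apply Hlipd; auto. nra. }
      assert (R2 : eps <= Ce * rho).
      { unfold rho. eapply Rle_trans. apply Hxd. rewrite <- Hedx at 1. apply Hlipe; auto. }
      assert (R3 : rho <= b - a - eta).
      { pose proof (ends_sum a' b' (e c) (e cf) x Hab' Hends Hxi) as S1.
        pose proof (ends_sum a b c cf (d x) Hab HcfJ Hdx) as S2.
        assert (Rabs (x - e cf) <= Ce * Rabs (d x - cf)).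
        { rewrite <- Hedx at 1. apply Hlipe; auto. }
        assert (eta <= Rabs (d x - cf)).
        { unfold eta. unfold Rdiv. apply (Rmult_le_reg_l Ce); [lra|].
          replace (Ce * ((b' - a' - 2 * eps) * / Ce)) with (b' - a' - 2 * eps) by (field; lra).
          lra. }
        unfold rho. lra. }
      assert (Hrho : 0 < rho) by nra.
      assert (HT : rho <= T) by (unfold T; apply Rmin_glb; lra).
      assert (HT3 : T * (/ 2) ^ (S m) <= rho).
      { pose proof (half_pow_pos (S m)). assert (T * (/ 2) ^ (S m) <= 2 * Cd * eps * (/ 2) ^ (S m)) by nra.
        assert (2 * Cd * eps * (/ 2) ^ (S m) <= Ce * rho * (2 * Cd * (/ 2) ^ S m)).
        { replace (2 * Cd * eps * (/ 2) ^ (S m)) with (eps * (2 * Cd * (/ 2) ^ S m)) by ring.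
          apply Rmult_le_compat_r; [nra|lra]. }
        assert (Ce * rho * (2 * Cd * (/ 2) ^ S m) = rho * ((/ 2) ^ (S m) * (2 * Cd * Ce))) by ring.
        assert (rho * ((/ 2) ^ (S m) * (2 * Cd * Ce)) <= rho * 1) by (apply Rmult_le_compat_l; lra).
        lra. }
      destruct (dyadic m T rho ltac:(lra) HT HT3) as [i [Hi [Hi1 Hi2]]].
      exists i. split; auto. split.
      - split; auto. exists (d x). split; auto.
      - pose proof (half_pow_pos (S i)). split. nra.
        assert (T * (/ 2) ^ S i <= T * / 2).
        { apply Rmult_le_compat_l. lra. simpl. 
          assert ((/ 2) ^ i <= 1) by apply half_pow_le1. nra. }
        lra. }
    split.
    + intros l Hl Hin.
      assert (Hcn : INR (length l) <= INR (S m) * L).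
      { apply (count_union A L m); auto.
        - intros i Hi l' Hl' Hin'. destruct l' as [|k l''].
          + simpl. lra.
          + destruct (Hin' k (in_eq _ _)) as [_ Hr]. apply (proj1 (HJ _ Hr)); auto.
            intros k' Hk'. apply (proj1 (Hin' k' Hk')).
        all: try (intros k Hk; apply Key, Hin; auto). }
      lra.
    + intros k Hk. destruct (Key k Hk) as [i [Hi [HA Hr]]]. pose proof (proj2 (HJ _ Hr) k HA) as Hp.
      assert (HkZ : (k0 <= k)%Z) by (destruct Hk; auto).
      pose proof (half_pow_pos (S i)). pose proof (half_pow_le1 (S i)).
      assert (HTp : 0 < T) by nra.
      assert (Hp2 : pow2 (- IZR k * L) <= 2 * Cd * eps) by nra.
      assert (E : - IZR k * (INR (S m) * L + 1) = - IZR k * L + - IZR k * (INR m * L + 1))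
        by (rewrite S_INR; ring).
      rewrite E, p2_plus.
      assert (Hk1 : pow2 (- IZR k * (INR m * L + 1)) <= pow2 (- IZR k0)).
      { apply p2_le. assert (IZR k0 <= IZR k) by (apply IZR_le; auto). assert (0 <= IZR k0) by (apply IZR_le; auto).
        pose proof (pos_INR m). assert (0 <= INR m * L) by nra. nra. }
      assert (Hk2 : pow2 (- IZR k0) * (2 * Cd) <= 1).
      { unfold Defs.pow2 in *. rewrite Rpower_Ropp. pose proof (p2_pos (IZR k0)). unfold Defs.pow2 in H1.
        apply (Rmult_le_reg_l (Rpower 2 (IZR k0))); auto. rewrite <- Rmult_assoc, Rinv_r by lra. lra. }
      pose proof (p2_pos (- IZR k * L)). pose proof (p2_pos (- IZR k * (INR m * L + 1))).
      pose proof (p2_pos (- IZR k0)).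
      assert (pow2 (- IZR k * L) * pow2 (- IZR k * (INR m * L + 1)) <= (2 * Cd * eps) * pow2 (- IZR k0)).
      { apply Rmult_le_compat; lra. }
      nra.
  - intros x Hx. apply (is_lim_seq_ext (fun m => partial_sum k0 cs gs m (d x))).
    reflexivity. apply Hsum, Hde; auto.
Qed.
End E.

Theorem lemma4p1 (a b c : R) (k0 : Z) (cs : Z -> R) (gs : Z -> R -> R) (f : R -> R) :
  a < b -> (c = a \/ c = b) ->
  smooth a b f ->
  pliable_series a b c k0 cs gs ->
  sums_to a b k0 cs gs f ->
  (* (a) *)
  (forall r : nat,
     is_lim_seq (fun m => Cnorm a b r (fun x => partial_sum k0 cs gs m x - f x)) 0) /\
  (* (b) *)
  (forall r : nat,
     deriv_n a b f r c = 0 /\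
     pliable_series a b c k0 cs (fun k => deriv_n a b (gs k) r) /\
     sums_to a b k0 cs (fun k => deriv_n a b (gs k) r) (deriv_n a b f r) /\
     pliable a b c (deriv_n a b f r)) /\
  (* (c) *)
  (forall h g : R -> R, smooth a b h -> smooth a b g -> ~ supp a b g c ->
     pliable a b c (fun x => h x * f x + g x)) /\
  (* (d) *)
  (forall iota : R -> R, (forall x y, Rabs (iota x - iota y) = Rabs (x - y)) ->
     forall a' b' c' : R, a' < b' ->
       (forall x, Icc a' b' x <-> Icc a b (iota x)) -> iota c' = c ->
       pliable a' b' c' (fun x => f (iota x))) /\
  (* (e) *)
  (forall (a' b' : R) (d e : R -> R), a' < b' ->
     smooth a' b' d -> smooth a b e ->
     (forall x, Icc a' b' x -> Icc a b (d x) /\ e (d x) = x) ->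
     (forall y, Icc a b y -> Icc a' b' (e y) /\ d (e y) = y) ->
     pliable a' b' (e c) (fun x => f (d x))).
Proof.
  intros Hab Hc Hf HP Hsum.
  pose proof HP as HP0.
  destruct HP0 as (Hpos & Hsup & Hsm & Hlf & Hexp & L & HL & HJ).
  assert (Hsm' : forall k, (k0 <= k)%Z -> smooth a b (gs k)) by (intros; apply Hsm; auto).
  split. { apply (part_a a b k0 cs gs f Hab Hpos Hsup Hsm' Hexp Hsum Hf). }
  split. { apply part_b; auto. }
  split.
  { intros h g Hh Hg Hgc.
    destruct (shift_series a b c k0 cs gs f (Z.to_nat (- k0)) Hab HP Hsum) as [HP2 Hs2].
    refine (part_c_core a b c _ _ _ f h g Hab Hc _ Hf HP2 Hs2 Hh Hg Hgc). lia. }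
  split.
  { intros iota Hiso a' b' c' Hab' HI Hc'.
    destruct (iso_affine iota Hiso) as [u [t [Hu ->]]].
    apply (part_d_core a b a' b' u t Hab Hab' Hu HI c c' k0 cs gs f); auto. }
  { intros a' b' d e Hab' Hd He Hde Hed.
    destruct (lip_d a' b' d Hab' Hd) as [Cd [HCd Hlip]].
    destruct (pow_lt_1_zero (/ 2) ltac:(rewrite Rabs_right; lra) (/ (2 * Cd))) as [n Hn].
    { apply Rinv_0_lt_compat. lra. }
    set (s := Z.to_nat (Z.of_nat n - k0)).
    destruct (shift_series a b c k0 cs gs f s Hab HP Hsum) as [HP2 Hs2].
    apply (part_e_core a b a' b' d e Hab Hab' Hd He Hde Hed c (k0 + Z.of_nat s) _ _ f Cd Hc Hf HP2 Hs2 HCd Hlip).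
    - unfold s; lia.
    - specialize (Hn n (le_n n)). rewrite Rabs_right in Hn by (apply Rle_ge, Rlt_le, half_pow_pos).
      assert (Hp : pow2 (IZR (Z.of_nat n)) = 2 ^ n).
      { rewrite <- INR_IZR_INZ. unfold Defs.pow2. apply Rpower_pow. lra. }
      assert (Hle : pow2 (IZR (Z.of_nat n)) <= pow2 (IZR (k0 + Z.of_nat s))).
      { apply p2_le. apply IZR_le. unfold s; lia. }
      rewrite Hp in Hle. rewrite pow_inv in Hn.
      assert (0 < 2 ^ n) by (apply pow_lt; lra).
      apply (Rmult_lt_compat_r (2 ^ n * (2 * Cd))) in Hn; [|nra].
      replace (/ 2 ^ n * (2 ^ n * (2 * Cd))) with (2 * Cd) in Hn by (field; lra).
      replace (/ (2 * Cd) * (2 ^ n * (2 * Cd))) with (2 ^ n) in Hn by (field; lra).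
      lra. }
Qed.
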